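(* In the setting of the context, suppose that for a given $n\in\{0,1,\dots,T/\tau-1\}$ the MTI-FA iterates satisfy $|y^n|\le C_0+1$ and $|\dot y^n|\le (C_0+1)/\varepsilon^2$. Let $z_\pm^n(s)$, $r^n(s)$ be the solution of the system $$2i\dot z_\pm^n(s)+\alpha z_\pm^n(s)+g_\pm(|z_+^n(s)|^2,|z_-^n(s)|^2)z_\pm^n(s)=0,$$ $$\varepsilon^2\ddot r^n(s)+\Big(\alpha+\frac1{\varepsilon^2}\Big)r^n(s)+g_r(z_+^n(s),z_-^n(s),r^n(s);s)+\varepsilon^2u^n(s)=0,\qquad s>0,$$ with $u^n(s)=e^{is/\varepsilon^2}\ddot z_+^n(s)+e^{-is/\varepsilon^2}\overline{\ddot z_-^n(s)}$ and initial data $z_\pm^n(0)=z_\pm^{(0)}$, $r^n(0)=0$, $\dot r^n(0)=\dot r^{(0)}$. Then there exists a constant $\tau_2>0$, independent of $\varepsilon$ and $n$, such that for $0<\tau\le\tau_2$ and all $n=0,1,\dots,T/\tau-1$, $$\Big\|\frac{d^m}{dt^m}z_\pm^n\Big\|_{L^\infty(0,\tau)}\lesssim1,\ m=0,1,2,3;\qquad \varepsilon^{2l-2}\Big\|\frac{d^l}{dt^l}r^n\Big\|_{L^\infty(0,\tau)}\lesssim1,\ l=0,1,2.$$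
   Context: Setting. Let $0<\varepsilon\le1$, $\alpha\ge0$, $\lambda\in\mathbb{R}$, $p\in\mathbb{N}_0=\{0,1,2,\dots\}$, $g(\rho)=\lambda\rho^p$ and $f(y)=g(|y|^2)y$ for $y\in\mathbb{C}$. Let $\phi_1,\phi_2\in\mathbb{C}$ (independent of $\varepsilon$) and let $y(t)\in\mathbb{C}$ solve $\varepsilon^2\ddot y+(\alpha+\varepsilon^{-2})y+f(y)=0$ for $t>0$, $y(0)=\phi_1$, $\dot y(0)=\phi_2/\varepsilon^2$. Let $T^*$ be the maximal existence time, fix $0<T<T^*$, and assume $y\in C^2(0,T)$ with $\|\frac{d^m}{dt^m}y\|_{L^\infty(0,T)}\lesssim\varepsilon^{-2m}$ for $m=0,1,2$. Set $C_0=\max\{\|y\|_{L^\infty(0,T)},\varepsilon^2\|\dot y\|_{L^\infty(0,T)},\varepsilon^4\|\ddot y\|_{L^\infty(0,T)}\}$. $A\lesssim B$ means $|A|\le CB$ for a generic constant $C>0$ independent of $\tau$ (or $n$) and $\varepsilon$. $\tau>0$ is the time step, $t_n=n\tau$, $\bar z$ denotes complex conjugation, $\omega=\sqrt{1+\varepsilon^2\alpha}/\varepsilon^2$. Auxiliary functions: for $k=0,\dots,p$ let $\langle p_1,p_2,p_3\rangle_k$ be the set of $(p_1,p_2,p_3)\in\mathbb{N}_0^3$ with $p_1+2p_2+p_3=p-k$, $p_3\in\{0,1\}$; $g_\pm(\rho_+,\rho_-)=\sum_{\langle p_1,p_2,p_3\rangle_0}\lambda(\rho_++\rho_-)^{p_1}(\rho_+\rho_-)^{p_2}(\rho_\mp)^{p_3}$;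 for $k=1,\dots,p$, $g_k(z_+,z_-)=\lambda z_+^{k+1}z_-^{k}\sum_{\langle p_1,p_2,p_3\rangle_k}(|z_+|^2+|z_-|^2)^{p_1}|z_+|^{2p_2}|z_-|^{2p_2+2p_3}$. With $w=e^{is/\varepsilon^2}z_++e^{-is/\varepsilon^2}\overline{z_-}$, let $h(z_+,z_-,r;s)=g(|w+r|^2)(w+r)-g(|w|^2)w$ and $g_r(z_+,z_-,r;s)=\sum_{k=1}^p\big(g_k(z_+,z_-)e^{i(2k+1)s/\varepsilon^2}+\overline{g_k(z_-,z_+)}e^{-i(2k+1)s/\varepsilon^2}\big)+h(z_+,z_-,r;s)$ (empty sums if $p=0$). Also $P_k=\int_0^\tau\frac{\sin(\omega(\tau-\theta))}{\varepsilon^2\omega}e^{i(2k+1)\theta/\varepsilon^2}d\theta$, $Q_k=\int_0^\tau\frac{\sin(\omega(\tau-\theta))}{\varepsilon^2\omega}e^{i(2k+1)\theta/\varepsilon^2}\theta\,d\theta$, $\dot P_k=\int_0^\tau\frac{\cos(\omega(\tau-\theta))}{\varepsilon^2}e^{i(2k+1)\theta/\varepsilon^2}d\theta$, $\dot Q_k=\int_0^\tau\frac{\cos(\omega(\tau-\theta))}{\varepsilon^2}e^{i(2k+1)\theta/\varepsilon^2}\theta\,d\theta$. Scheme MTI-FA: $y^0=\phi_1$, $\dot y^0=\phi_2/\varepsilon^2$; given $(y^n,\dot y^n)$ let $z_+^{(0)}=\frac{y^n-i\varepsilon^2\dot y^n}{2}$, $z_-^{(0)}=\frac{\overline{y^n}-i\varepsilon^2\overline{\dot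 y^n}}{2}$, $\mu_\pm=\frac12g_\pm(|z_+^{(0)}|^2,|z_-^{(0)}|^2)+\frac\alpha2$, $\dot z_\pm^{(0)}=i\mu_\pm z_\pm^{(0)}$, $\dot r^{(0)}=-\dot z_+^{(0)}-\overline{\dot z_-^{(0)}}$, $u^{(0)}=-\mu_+^2z_+^{(0)}-\mu_-^2\overline{z_-^{(0)}}$, $g_{k,\pm}^{(0)}=g_k(z_\pm^{(0)},z_\mp^{(0)})$, $\dot g_{k,\pm}^{(0)}=\frac{d}{ds}g_k(Z_\pm(s),Z_\mp(s))|_{s=0}$ with $Z_\pm(s)=e^{i\mu_\pm s}z_\pm^{(0)}$; $z_\pm^{n+1}=e^{i\mu_\pm\tau}z_\pm^{(0)}$, $\dot z_\pm^{n+1}=i\mu_\pm z_\pm^{n+1}$, $\ddot z_\pm^{n+1}=-\mu_\pm^2z_\pm^{n+1}$, $r^{n+1}=\frac{\sin(\omega\tau)}{\omega}(\dot r^{(0)}-\frac\tau2u^{(0)})-\sum_{k=1}^p[P_kg_{k,+}^{(0)}+Q_k\dot g_{k,+}^{(0)}+\overline{P_kg_{k,-}^{(0)}}+\overline{Q_k\dot g_{k,-}^{(0)}}]$, $y^{n+1}=e^{i\tau/\varepsilon^2}z_+^{n+1}+e^{-i\tau/\varepsilon^2}\overline{z_-^{n+1}}+r^{n+1}$, $u^{n+1}=e^{i\tau/\varepsilon^2}\ddot z_+^{n+1}+e^{-i\tau/\varepsilon^2}\overline{\ddot z_-^{n+1}}$, $h^{n+1}=g(|y^{n+1}|^2)y^{n+1}-g(|y^{n+1}-r^{n+1}|^2)(y^{n+1}-r^{n+1})$,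 $\dot r^{n+1}=-\sum_{k=1}^p[\dot P_kg_{k,+}^{(0)}+\dot Q_k\dot g_{k,+}^{(0)}+\overline{\dot P_kg_{k,-}^{(0)}}+\overline{\dot Q_k\dot g_{k,-}^{(0)}}]+\cos(\omega\tau)(\dot r^{(0)}-\frac\tau2u^{(0)})-\frac\tau2(\frac{h^{n+1}}{\varepsilon^2}+u^{n+1})$, $\dot y^{n+1}=e^{i\tau/\varepsilon^2}(\dot z_+^{n+1}+\frac{i}{\varepsilon^2}z_+^{n+1})+e^{-i\tau/\varepsilon^2}(\overline{\dot z_-^{n+1}}-\frac{i}{\varepsilon^2}\overline{z_-^{n+1}})+\dot r^{n+1}$. Here $z_\pm^{(0)},\dot r^{(0)}$ refer to the quantities built from the given $(y^n,\dot y^n)$. *)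

(* Defs.v *)
From Stdlib Require Import Reals.
From Coquelicot Require Import Coquelicot.
Open Scope R_scope.

Definition gfun (lambda : R) (p : nat) (rho : R) : R := lambda * rho ^ p.

Definition ffun (lambda : R) (p : nat) (y : C) : C :=
  (RtoC (gfun lambda p (Cmod y ^ 2)) * y)%C.

Definition cis (theta : R) : C := (cos theta, sin theta).

Fixpoint rsum (n : nat) (F : nat -> R) : R :=
  match n with O => 0 | S m => rsum m F + F m end.

Fixpoint csum1 (n : nat) (F : nat -> C) : C :=
  match n with O => RtoC 0 | S m => (csum1 m F + F (S m))%C end.

(* Sum of F p1 p2 p3 over the index set <p1,p2,p3> with p1 + 2 p2 + p3 = q,
   p3 in {0,1}; for <p1,p2,p3>_k take q = p - k. *)
Definition tri_sum (q : nat) (F : nat -> nat -> nat -> R) : R :=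
  rsum (S q) (fun p2 => rsum 2 (fun p3 =>
    if Nat.leb (2 * p2 + p3) q then F (q - 2 * p2 - p3)%nat p2 p3 else 0)).

Definition g_plus (lambda : R) (p : nat) (rp rm : R) : R :=
  tri_sum p (fun p1 p2 p3 => lambda * (rp + rm) ^ p1 * (rp * rm) ^ p2 * rm ^ p3).
Definition g_minus (lambda : R) (p : nat) (rp rm : R) : R :=
  tri_sum p (fun p1 p2 p3 => lambda * (rp + rm) ^ p1 * (rp * rm) ^ p2 * rp ^ p3).

Definition g_k_sum (lambda : R) (p k : nat) (zp zm : C) : R :=
  tri_sum (p - k) (fun p1 p2 p3 =>
      (Cmod zp ^ 2 + Cmod zm ^ 2) ^ p1 * Cmod zp ^ (2 * p2)
      * Cmod zm ^ (2 * p2 + 2 * p3)).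
Definition g_k (lambda : R) (p k : nat) (zp zm : C) : C :=
  (RtoC lambda * Cpow zp (S k) * Cpow zm k * RtoC (g_k_sum lambda p k zp zm))%C.

Definition wfun (eps : R) (zp zm : C) (s : R) : C :=
  (cis (s / eps ^ 2) * zp + cis (- (s / eps ^ 2)) * Cconj zm)%C.

Definition hfun (lambda : R) (p : nat) (eps : R) (zp zm r : C) (s : R) : C :=
  (ffun lambda p (wfun eps zp zm s + r) - ffun lambda p (wfun eps zp zm s))%C.

Definition g_r (lambda : R) (p : nat) (eps : R) (zp zm r : C) (s : R) : C :=
  (csum1 p (fun k =>
      g_k lambda p k zp zm * cis (INR (2 * k + 1) * s / eps ^ 2)
      + Cconj (g_k lambda p k zm zp) * cis (- (INR (2 * k + 1) * s / eps ^ 2)))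
   + hfun lambda p eps zp zm r s)%C.

Definition z_plus0 (eps : R) (yn ydn : C) : C :=
  (RtoC (/ 2) * (yn - Ci * RtoC (eps ^ 2) * ydn))%C.
Definition z_minus0 (eps : R) (yn ydn : C) : C :=
  (RtoC (/ 2) * (Cconj yn - Ci * RtoC (eps ^ 2) * Cconj ydn))%C.
Definition mu_plus (alpha lambda : R) (p : nat) (eps : R) (yn ydn : C) : R :=
  / 2 * g_plus lambda p (Cmod (z_plus0 eps yn ydn) ^ 2) (Cmod (z_minus0 eps yn ydn) ^ 2)
  + alpha / 2.
Definition mu_minus (alpha lambda : R) (p : nat) (eps : R) (yn ydn : C) : R :=
  / 2 * g_minus lambda p (Cmod (z_plus0 eps yn ydn) ^ 2) (Cmod (z_minus0 eps yn ydn) ^ 2)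
  + alpha / 2.
(* dz_pm^(0) = i mu_pm z_pm^(0);  dr^(0) = - dz_+^(0) - conj(dz_-^(0)) *)
Definition rdot0 (alpha lambda : R) (p : nat) (eps : R) (yn ydn : C) : C :=
  (- (Ci * RtoC (mu_plus alpha lambda p eps yn ydn) * z_plus0 eps yn ydn)
   - Cconj (Ci * RtoC (mu_minus alpha lambda p eps yn ydn) * z_minus0 eps yn ydn))%C.

Definition is_solution (alpha lambda : R) (p : nat) (eps tau : R) (yn ydn : C)
  (zp zp1 zp2 zp3 zm zm1 zm2 zm3 r r1 r2 : R -> C) : Prop :=
  (forall s, 0 <= s <= tau ->
     is_derive zp s (zp1 s) /\ is_derive zp1 s (zp2 s) /\ is_derive zp2 s (zp3 s) /\
     is_derive zm s (zm1 s) /\ is_derive zm1 s (zm2 s) /\ is_derive zm2 s (zm3 s) /\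
     is_derive r s (r1 s) /\ is_derive r1 s (r2 s) /\
     (2 * Ci * zp1 s + RtoC alpha * zp s
        + RtoC (g_plus lambda p (Cmod (zp s) ^ 2) (Cmod (zm s) ^ 2)) * zp s = 0)%C /\
     (2 * Ci * zm1 s + RtoC alpha * zm s
        + RtoC (g_minus lambda p (Cmod (zp s) ^ 2) (Cmod (zm s) ^ 2)) * zm s = 0)%C /\
     (RtoC (eps ^ 2) * r2 s + RtoC (alpha + / eps ^ 2) * r s
        + g_r lambda p eps (zp s) (zm s) (r s) s
        + RtoC (eps ^ 2) * (cis (s / eps ^ 2) * zp2 s
                            + cis (- (s / eps ^ 2)) * Cconj (zm2 s)) = 0)%C) /\
  zp 0 = z_plus0 eps yn ydn /\ zm 0 = z_minus0 eps yn ydn /\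
  r 0 = RtoC 0 /\ r1 0 = rdot0 alpha lambda p eps yn ydn.

(* Main.v *)
Require Import Defs.
From Stdlib Require Import Reals Lra Lia Psatz.
From Coquelicot Require Import Coquelicot.
Open Scope R_scope.
Lemma dmul (f g : R -> R) t a b : is_derive f t a -> is_derive g t b ->
  is_derive (fun x => f x * g x) t (a * g t + f t * b).
Proof. intros Ha Hb. apply (is_derive_mult f g t a b Ha Hb). intros; apply Rmult_comm. Qed.
Lemma dadd (f g : R -> R) t a b : is_derive f t a -> is_derive g t b ->
  is_derive (fun x => f x + g x) t (a + b).
Proof. intros Ha Hb. apply (is_derive_plus f g t a b Ha Hb). Qed.
Lemma dsub (f g : R -> R) t a b : is_derive f t a -> is_derive g t b ->
  is_derive (fun x => f x - g x) t (a - b).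
Proof. intros Ha Hb. apply (is_derive_minus f g t a b Ha Hb). Qed.
Lemma dcst (c : R) t : is_derive (fun _ => c) t 0.
Proof. apply (is_derive_const c t). Qed.
Lemma did t : is_derive (fun x : R => x) t 1.
Proof. apply (is_derive_id t). Qed.
Lemma dcos (f : R -> R) t a : is_derive f t a -> is_derive (fun x => cos (f x)) t (- sin (f t) * a).
Proof. intros Ha. pose proof (is_derive_comp cos f t _ a (is_derive_cos (f t)) Ha) as H.
 rewrite Rmult_comm. exact H. Qed.
Lemma dsin (f : R -> R) t a : is_derive f t a -> is_derive (fun x => sin (f x)) t (cos (f t) * a).
Proof. intros Ha. pose proof (is_derive_comp sin f t _ a (is_derive_sin (f t)) Ha) as H.
 rewrite Rmult_comm. exact H. Qed.
Lemma dexp (f : R -> R) t a : is_derive f t a -> is_derive (fun x => exp (f x)) t (exp (f t) * a).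
Proof. intros Ha. pose proof (is_derive_comp exp f t _ a (is_derive_exp (f t)) Ha) as H.
 rewrite Rmult_comm. exact H. Qed.
Lemma dext (f g : R -> R) (t a b : R) : (forall x, f x = g x) -> a = b -> is_derive f t a -> is_derive g t b.
Proof. intros H1 H2 H. subst. eapply is_derive_ext. exact H1. exact H. Qed.
Lemma is_derive_cont (f : R -> R) t l : is_derive f t l -> continuity_pt f t.
Proof.
intros H. apply is_derive_Reals in H.
apply derivable_continuous_pt. exists l. exact H.
Qed.

Lemma mono_le (phi dphi : R -> R) (T : R) :
  (forall t, 0 <= t <= T -> is_derive phi t (dphi t) /\ dphi t <= 0) ->
  forall t, 0 <= t <= T -> phi t <= phi 0.
Proof.
intros H t Ht.
destruct (MVT_gen phi 0 t dphi) as [c [Hc Heq]].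
- intros x Hx. rewrite Rmin_left in Hx by lra. rewrite Rmax_right in Hx by lra.
  apply H; lra.
- intros x Hx. rewrite Rmin_left in Hx by lra. rewrite Rmax_right in Hx by lra.
  apply (is_derive_cont _ _ (dphi x)). apply H; lra.
- rewrite Rmin_left in Hc by lra. rewrite Rmax_right in Hc by lra.
  assert (dphi c <= 0) by (apply H; lra).
  assert (dphi c * (t - 0) <= 0). { apply Rmult_le_0_r; lra. }
  lra.
Qed.

Lemma deriv_unique_R (f g : R -> R) t l l' T :
  is_derive f t l -> is_derive g t l' -> 0 < T -> 0 <= t <= T ->
  (forall x, 0 <= x <= T -> f x = g x) -> l = l'.
Proof.
intros Hf Hg HT Ht Heq.
assert (Hd : is_derive (fun x => f x - g x) t (l - l')).
{ apply (is_derive_minus f g t l l' Hf Hg). }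
apply is_derive_Reals in Hd.
destruct (Req_dec (l - l') 0) as [E|E]; [lra|].
exfalso.
destruct (Hd (Rabs (l - l'))) as [d Hdel]. { apply Rabs_pos_lt; exact E. }
assert (Hd0 := cond_pos d).
destruct (Rlt_le_dec t T) as [HtT|HtT].
- set (h := Rmin (d/2) (T - t)).
  assert (Hh : 0 < h). { unfold h. apply Rmin_glb_lt; lra. }
  assert (Hh1 : h <= d/2) by (apply Rmin_l).
  assert (Hh2 : h <= T - t) by (apply Rmin_r).
  specialize (Hdel h). 
  assert (H0 : h <> 0) by lra.
  assert (H1 : Rabs h < d). { rewrite Rabs_right by lra. lra. }
  specialize (Hdel H0 H1).
  rewrite (Heq (t+h)) in Hdel by lra. rewrite (Heq t) in Hdel by lra.
  replace ((g (t + h) - g (t + h) - (g t - g t)) / h - (l - l')) with (- (l - l')) in Hdel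
    by (field; lra).
  rewrite Rabs_Ropp in Hdel. lra.
- set (h := - Rmin (d/2) T).
  assert (Hh : 0 < Rmin (d/2) T). { apply Rmin_glb_lt; lra. }
  assert (Hh1 : Rmin (d/2) T <= d/2) by (apply Rmin_l).
  assert (Hh2 : Rmin (d/2) T <= T) by (apply Rmin_r).
  specialize (Hdel h).
  assert (H0 : h <> 0) by (unfold h; lra).
  assert (H1 : Rabs h < d). { unfold h. rewrite Rabs_Ropp, Rabs_right by lra. lra. }
  specialize (Hdel H0 H1).
  rewrite (Heq (t+h)) in Hdel by (unfold h; lra). rewrite (Heq t) in Hdel by lra.
  replace ((g (t + h) - g (t + h) - (g t - g t)) / h - (l - l')) with (- (l - l')) in Hdel
    by (field; lra).
  rewrite Rabs_Ropp in Hdel. lra.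
Qed.
Lemma cont_le_left (F : R -> R) m B :
  0 < m -> continuity_pt F m -> (forall t, 0 <= t < m -> F t <= B) -> F m <= B.
Proof.
intros Hm Hc H.
destruct (Rle_dec (F m) B) as [|Hn]; [auto|]. exfalso.
apply Rnot_le_lt in Hn.
destruct (Hc (F m - B)) as [d [Hd Hdd]]. lra.
set (t := Rmax 0 (m - d/2)).
assert (Ht0 : 0 <= t) by apply Rmax_l.
assert (Ht1 : m - d/2 <= t) by apply Rmax_r.
assert (Htm : t < m). { unfold t. apply Rmax_lub_lt; lra. }
specialize (Hdd t). simpl in Hdd. unfold R_dist, D_x, no_cond in Hdd.
assert (Hlt : Rabs (F t - F m) < F m - B).
{ apply Hdd. split. split. auto. lra. rewrite Rabs_left by lra. lra. }
specialize (H t (conj Ht0 Htm)).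
rewrite Rabs_left1 in Hlt. lra. lra.
Qed.

Lemma bootstrap (F : R -> R) T B B' :
  0 <= T -> B' < B -> (forall t, 0 <= t <= T -> continuity_pt F t) -> F 0 <= B' ->
  (forall s, 0 <= s <= T -> (forall t, 0 <= t <= s -> F t <= B) -> F s <= B') ->
  forall s, 0 <= s <= T -> F s <= B'.
Proof.
intros HT HB Hc H0 Hstep.
set (A := fun x => 0 <= x <= T /\ forall t, 0 <= t <= x -> F t <= B).
assert (Hbd : bound A). { exists T. intros x [Hx _]. lra. }
assert (Hne : exists x, A x).
{ exists 0. split. lra. intros t Ht. replace t with 0 by lra. lra. }
destruct (completeness A Hbd Hne) as [m [Hub Hlub]].
assert (Hm0 : 0 <= m). { apply Hub. destruct Hne as [x Hx]. split. lra. intros t Ht. replace t with 0 by lra. lra. }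
assert (HmT : m <= T). { apply Hlub. intros x [Hx _]. lra. }
assert (Hbelow : forall t, 0 <= t < m -> F t <= B).
{ intros t Ht. destruct (Rle_dec m t) as [Hle|Hlt]. lra.
  destruct (Rle_dec t t) as [_|]; [|lra].
  assert (exists x, A x /\ t < x) as [x [[Hx Hx2] Htx]].
  { apply Classical_Prop.NNPP. intros Hno.
    assert (m <= t). { apply Hlub. intros x Ax. apply Rnot_lt_le. intros Hlt'. apply Hno. exists x. auto. }
    lra. }
  apply Hx2. lra. }
assert (HFm : F m <= B).
{ destruct (Req_dec m 0) as [E|E]. rewrite E. lra.
  apply cont_le_left. lra. apply Hc. lra. exact Hbelow. }
assert (Hall : forall t, 0 <= t <= m -> F t <= B).
{ intros t Ht. destruct (Req_dec t m) as [E|E]. subst. auto. apply Hbelow. lra. }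
assert (Hall' : forall s, 0 <= s <= m -> F s <= B').
{ intros s Hs. apply Hstep. lra. intros t Ht. apply Hall. lra. }
destruct (Req_dec m T) as [E|E].
- intros s Hs. apply Hall'. lra.
- exfalso.
  assert (HFm' : F m <= B') by (apply Hall'; lra).
  destruct (Hc m (conj Hm0 HmT) (B - F m)) as [d [Hd Hdd]]. lra.
  set (x := Rmin T (m + d/2)).
  assert (Hx1 : x <= T) by apply Rmin_l.
  assert (Hx2 : x <= m + d/2) by apply Rmin_r.
  assert (Hx3 : m < x). { unfold x. apply Rmin_glb_lt; lra. }
  assert (A x).
  { split. lra. intros t Ht.
    destruct (Rle_dec t m) as [Htm|Htm]. apply Hall. lra.
    specialize (Hdd t). simpl in Hdd. unfold R_dist, D_x, no_cond in Hdd.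
    assert (Hlt : Rabs (F t - F m) < B - F m).
    { apply Hdd. split. split. auto. lra. rewrite Rabs_right by lra. lra. }
    apply Rabs_def2 in Hlt. lra. }
  assert (x <= m) by (apply Hub; auto). lra.
Qed.
Lemma der_pair (f : R -> C) t a b :
  is_derive (fun s => Re (f s)) t a -> is_derive (fun s => Im (f s)) t b ->
  is_derive f t (a, b).
Proof.
intros Ha Hb.
apply (is_derive_ext (fun s => (Re (f s), Im (f s)) : C)).
{ intros s. destruct (f s); reflexivity. }
unfold is_derive in *.
eapply filterdiff_ext_lin.
apply (filterdiff_comp'_2 (fun s => Re (f s)) (fun s => Im (f s)) (fun x y => (x, y) : C) t
   (fun y => scal y a) (fun y => scal y b) (fun x y => (x,y) : C) Ha Hb).
apply filterdiff_linear. split.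
- intros [x1 x2] [y1 y2]; reflexivity.
- intros k [x1 x2]; reflexivity.
- exists 1. split. lra. intros [x1 x2]. rewrite Rmult_1_l. apply Rle_refl.
- intros y. reflexivity.
Qed.
Lemma der_re (q : R -> C) s d : is_derive q s d -> is_derive (fun t => Re (q t)) s (Re d).
Proof.
intros H. unfold is_derive in *.
apply (filterdiff_comp q (fun c : C => fst c) (fun y => scal y d) (fun c : C => fst c) H).
apply filterdiff_linear. apply is_linear_fst.
Qed.
Lemma der_im (q : R -> C) s d : is_derive q s d -> is_derive (fun t => Im (q t)) s (Im d).
Proof.
intros H. unfold is_derive in *.
apply (filterdiff_comp q (fun c : C => snd c) (fun y => scal y d) (fun c : C => snd c) H).
apply filterdiff_linear. apply is_linear_snd.
Qed.
Lemma exp_mono x y : x <= y -> exp x <= exp y.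
Proof. intros [H|H]. left; apply exp_increasing; auto. subst; lra. Qed.

Lemma cs_ineq a b x y : a * x + b * y <= sqrt (a^2 + b^2) * sqrt (x^2 + y^2).
Proof.
assert (0 <= a^2+b^2) by nra. assert (0 <= x^2+y^2) by nra.
rewrite <- sqrt_mult by assumption.
destruct (Rle_dec (a*x+b*y) 0). { pose proof (sqrt_pos ((a ^ 2 + b ^ 2) * (x ^ 2 + y ^ 2))). lra. }
rewrite <- (sqrt_pow2 (a*x+b*y)) by lra.
apply sqrt_le_1_alt. pose proof (pow2_ge_0 (a*y-b*x)). nra.
Qed.

Definition Enf (om2 : R) (q q1 : R -> C) (t : R) : R :=
  Re (q1 t) ^ 2 + Im (q1 t) ^ 2 + om2 * (Re (q t) ^ 2 + Im (q t) ^ 2).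

Lemma energy (q q1 q2 : R -> C) om2 c L T :
  0 < om2 -> 0 <= c -> 0 <= L -> 0 <= T ->
  (forall t, 0 <= t <= T -> is_derive q t (q1 t) /\ is_derive q1 t (q2 t) /\
      Cmod (q2 t + RtoC om2 * q t)%C <= c + L * sqrt (Enf om2 q q1 t)) ->
  forall t, 0 <= t <= T -> Enf om2 q q1 t <= (Enf om2 q q1 0 + c^2 * T) * exp ((2*L+1) * T).
Proof.
intros Hom Hc HL HT H t Ht.
set (k := 2*L+1).
set (E := Enf om2 q q1).
set (dE := fun t => 2 * (Re (q1 t) * Re (q2 t) + Im (q1 t) * Im (q2 t))
                    + om2 * (2 * (Re (q t) * Re (q1 t) + Im (q t) * Im (q1 t)))).
assert (HdE : forall t, 0 <= t <= T -> is_derive E t (dE t)).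
{ intros s Hs. destruct (H s Hs) as [H1 [H2 _]].
  pose proof (der_re _ _ _ H1) as R1. pose proof (der_im _ _ _ H1) as I1.
  pose proof (der_re _ _ _ H2) as R2. pose proof (der_im _ _ _ H2) as I2.
  unfold E, Enf, dE.
  pose proof (dadd _ _ _ _ _ (dadd _ _ _ _ _ (dmul _ _ _ _ _ R2 R2) (dmul _ _ _ _ _ I2 I2))
     (dmul _ _ _ _ _ (dcst om2 s) (dadd _ _ _ _ _ (dmul _ _ _ _ _ R1 R1) (dmul _ _ _ _ _ I1 I1)))) as P.
  eapply dext; [| |exact P]. intros u; simpl; ring. simpl; ring. }
assert (Hpos : forall t, 0 <= E t).
{ intros s. unfold E, Enf. pose proof (pow2_ge_0 (Re (q1 s))). pose proof (pow2_ge_0 (Im (q1 s))).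
  pose proof (pow2_ge_0 (Re (q s))). pose proof (pow2_ge_0 (Im (q s))). nra. }
assert (HdEb : forall t, 0 <= t <= T -> dE t <= k * E t + c^2).
{ intros s Hs. destruct (H s Hs) as [_ [_ Hb]].
  set (w := (q2 s + RtoC om2 * q s)%C) in *. change (Enf om2 q q1 s) with (E s) in Hb.
  assert (Hw1 : Re w = Re (q2 s) + om2 * Re (q s)) by (unfold w, Re, Cplus, Cmult, RtoC; simpl; ring).
  assert (Hw2 : Im w = Im (q2 s) + om2 * Im (q s)) by (unfold w, Im, Cplus, Cmult, RtoC; simpl; ring).
  assert (HdE' : dE s = 2 * (Re (q1 s) * Re w + Im (q1 s) * Im w)) by (unfold dE; rewrite Hw1, Hw2; ring).
  pose proof (cs_ineq (Re (q1 s)) (Im (q1 s)) (Re w) (Im w)) as Hcs.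
  assert (Hcm : sqrt (Re w ^ 2 + Im w ^ 2) = Cmod w) by reflexivity.
  rewrite Hcm in Hcs.
  assert (Hq1 : sqrt (Re (q1 s) ^ 2 + Im (q1 s) ^ 2) <= sqrt (E s)).
  { apply sqrt_le_1_alt. unfold E, Enf. pose proof (pow2_ge_0 (Re (q s))). pose proof (pow2_ge_0 (Im (q s))). nra. }
  pose proof (sqrt_pos (Re (q1 s) ^ 2 + Im (q1 s) ^ 2)).
  pose proof (sqrt_pos (E s)). pose proof (Cmod_ge_0 w).
  assert (HE : sqrt (E s) * sqrt (E s) = E s) by (apply sqrt_sqrt; apply Hpos).
  assert (dE s <= 2 * sqrt (E s) * (c + L * sqrt (E s))).
  { rewrite HdE'.
    assert (sqrt (Re (q1 s) ^ 2 + Im (q1 s) ^ 2) * Cmod w <= sqrt (E s) * Cmod w) by (apply Rmult_le_compat_r; lra).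
    assert (sqrt (E s) * Cmod w <= sqrt (E s) * (c + L * sqrt (E s))) by (apply Rmult_le_compat_l; lra).
    lra. }
  unfold k. pose proof (pow2_ge_0 (sqrt (E s) - c)) as Hsq.
  assert (Hx : (sqrt (E s) - c) ^ 2 = sqrt (E s) * sqrt (E s) - 2 * sqrt (E s) * c + c^2) by ring.
  assert (Hy : 2 * sqrt (E s) * (c + L * sqrt (E s)) = 2 * sqrt (E s) * c + 2 * L * (sqrt (E s) * sqrt (E s))) by ring.
  rewrite HE in Hx, Hy.
  lra. }
set (phi := fun t => E t * exp (- (k * t)) - c^2 * t).
assert (Hphi : forall t, 0 <= t <= T -> phi t <= phi 0).
{ apply (mono_le phi (fun t => dE t * exp (- (k*t)) - k * E t * exp (- (k*t)) - c^2)).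
  intros s Hs. split.
  - pose proof (dmul _ _ _ _ _ (dcst k s) (did s)) as Hk.
    pose proof (dsub _ _ _ _ _ (dcst 0 s) Hk) as Hk2.
    pose proof (dexp _ _ _ Hk2) as Hex.
    pose proof (dmul _ _ _ _ _ (HdE s Hs) Hex) as Hm.
    pose proof (dsub _ _ _ _ _ Hm (dmul _ _ _ _ _ (dcst (c^2) s) (did s))) as Hf.
    eapply dext; [| |exact Hf]. intros x; unfold phi; rewrite Rminus_0_l; ring.
    cbv beta. rewrite Rminus_0_l. ring.
  - pose proof (HdEb s Hs). assert (0 < exp (- (k*s))) by apply exp_pos.
    assert (exp (- (k*s)) <= 1). { rewrite <- exp_0. apply exp_mono. unfold k. nra. }
    assert (0 <= c^2) by nra.
    assert (Hz : (dE s - k * E s) * exp (- (k*s)) <= c^2 * exp (- (k*s))) by (apply Rmult_le_compat_r; lra).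
    assert (c^2 * exp (- (k*s)) <= c^2) by (rewrite <- (Rmult_1_r (c^2)) at 2; apply Rmult_le_compat_l; lra).
    lra. }
specialize (Hphi t Ht). unfold phi in Hphi.
rewrite Rmult_0_r, Ropp_0, exp_0, Rmult_0_r, Rmult_1_r, Rminus_0_r in Hphi.
assert (Hex : exp (- (k*t)) * exp (k*t) = 1) by (rewrite <- exp_plus; replace (- (k*t) + k*t) with 0 by ring; apply exp_0).
assert (E t <= (E 0 + c^2 * t) * exp (k * t)).
{ replace (E t) with (E t * exp (- (k*t)) * exp (k * t)) by (rewrite Rmult_assoc, Hex; ring).
  apply Rmult_le_compat_r. left; apply exp_pos. lra. }
assert (0 <= E 0 + c^2 * t) by (pose proof (Hpos 0); nra).
assert (exp (k*t) <= exp (k*T)) by (apply exp_mono; unfold k; nra).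
assert ((E 0 + c^2 * t) * exp (k * t) <= (E 0 + c^2 * T) * exp (k * T)).
{ apply Rmult_le_compat; try lra. left; apply exp_pos. nra. }
unfold E, k in *. lra.
Qed.

Lemma C_ext (a b : C) : Re a = Re b -> Im a = Im b -> a = b.
Proof. destruct a, b; simpl; intros; subst; reflexivity. Qed.

Ltac cunf := unfold Re, Im, Cplus, Cmult, Cminus, Copp, RtoC, Ci, Cconj, cis in *; simpl in *.

Lemma der_unique_C (f g : R -> C) t l l' T :
  is_derive f t l -> is_derive g t l' -> 0 < T -> 0 <= t <= T ->
  (forall x, 0 <= x <= T -> f x = g x) -> l = l'.
Proof.
intros Hf Hg HT Ht Heq. apply C_ext.
- apply (deriv_unique_R _ _ t _ _ T (der_re _ _ _ Hf) (der_re _ _ _ Hg) HT Ht).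
  intros x Hx. rewrite Heq; auto.
- apply (deriv_unique_R _ _ t _ _ T (der_im _ _ _ Hf) (der_im _ _ _ Hg) HT Ht).
  intros x Hx. rewrite Heq; auto.
Qed.

Lemma Cmod_cis a : Cmod (cis a) = 1.
Proof. unfold Cmod, cis; simpl. pose proof (sin2_cos2 a) as H. unfold Rsqr in H.
 replace (cos a * (cos a * 1) + sin a * (sin a * 1)) with 1 by lra. apply sqrt_1. Qed.

Lemma cis_add a b : (cis a * cis b)%C = cis (a + b).
Proof. apply C_ext; cunf; [rewrite cos_plus|rewrite sin_plus]; ring. Qed.

Lemma cis_conj a : Cconj (cis a) = cis (- a).
Proof. apply C_ext; cunf; [rewrite cos_neg|rewrite sin_neg]; ring. Qed.

Lemma cis_0 : cis 0 = RtoC 1.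
Proof. apply C_ext; cunf; [rewrite cos_0|rewrite sin_0]; ring. Qed.

Lemma der_cis (a : C) (nu t : R) :
  is_derive (fun s => (a * cis (nu * s))%C) t (Ci * RtoC nu * a * cis (nu * t))%C.
Proof.
pose proof (dmul _ _ _ _ _ (dcst nu t) (did t)) as Hl.
pose proof (dcos _ _ _ Hl) as Hc. pose proof (dsin _ _ _ Hl) as Hs.
apply der_pair.
- eapply dext; [| |apply (dsub _ _ _ _ _ (dmul _ _ _ _ _ (dcst (Re a) t) Hc) (dmul _ _ _ _ _ (dcst (Im a) t) Hs))].
  intros x; cunf; ring. cunf; ring.
- eapply dext; [| |apply (dadd _ _ _ _ _ (dmul _ _ _ _ _ (dcst (Re a) t) Hs) (dmul _ _ _ _ _ (dcst (Im a) t) Hc))].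
  intros x; cunf; ring. cunf; ring.
Qed.

Lemma solve_z (a b : C) (k : R) : (2 * Ci * a + RtoC (2*k) * b = 0)%C -> a = (Ci * RtoC k * b)%C.
Proof.
destruct a as [a1 a2], b as [b1 b2]. intros H. cunf.
injection H; intros H2 H1. f_equal; nra.
Qed.

Lemma mod_const (z z1 : R -> C) (k : R -> R) T :
  0 <= T ->
  (forall t, 0 <= t <= T -> is_derive z t (z1 t) /\ z1 t = (Ci * RtoC (k t) * z t)%C) ->
  forall t, 0 <= t <= T -> Cmod (z t) = Cmod (z 0).
Proof.
intros HT H t Ht.
set (m := fun s => Re (z s) * Re (z s) + Im (z s) * Im (z s)).
assert (Hd : forall s, 0 <= s <= T -> is_derive m s 0).
{ intros s Hs. destruct (H s Hs) as [Hz Hz1].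
  pose proof (der_re _ _ _ Hz) as R1. pose proof (der_im _ _ _ Hz) as I1.
  eapply dext; [| |apply (dadd _ _ _ _ _ (dmul _ _ _ _ _ R1 R1) (dmul _ _ _ _ _ I1 I1))].
  intros x; reflexivity. rewrite Hz1. cunf. ring. }
assert (m t <= m 0). { apply (mono_le m (fun _ => 0) T). intros s Hs. split; [apply Hd; auto|lra]. auto. }
assert (- m t <= - m 0).
{ apply (mono_le (fun s => - m s) (fun _ => 0) T). intros s Hs. split; [|lra].
  eapply dext; [| |apply (is_derive_opp m s 0 (Hd s Hs))]. intros; reflexivity. simpl. unfold opp; simpl. ring. auto. }
unfold Cmod. f_equal. unfold m in *. cunf. lra.
Qed.

Lemma explicit_z (z z1 : R -> C) (mu : R) T :
  0 <= T ->
  (forall t, 0 <= t <= T -> is_derive z t (z1 t) /\ z1 t = (Ci * RtoC mu * z t)%C) ->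
  forall t, 0 <= t <= T -> z t = (cis (mu * t) * z 0)%C.
Proof.
intros HT H t Ht.
set (psi := fun s => (cis (- (mu * s)) * z s)%C).
assert (Hd : forall s, 0 <= s <= T -> is_derive (fun s => Re (psi s)) s 0 /\ is_derive (fun s => Im (psi s)) s 0).
{ intros s Hs. destruct (H s Hs) as [Hz Hz1].
  pose proof (der_re _ _ _ Hz) as R1. pose proof (der_im _ _ _ Hz) as I1.
  pose proof (dmul _ _ _ _ _ (dcst mu s) (did s)) as Hl.
  pose proof (dcos _ _ _ Hl) as Hc. pose proof (dsin _ _ _ Hl) as Hs'.
  rewrite Hz1 in R1, I1. cunf.
  split.
  - eapply dext; [| |apply (dadd _ _ _ _ _ (dmul _ _ _ _ _ Hc R1) (dmul _ _ _ _ _ Hs' I1))].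
    intros x; unfold psi; cunf; rewrite cos_neg, sin_neg; ring. ring.
  - eapply dext; [| |apply (dsub _ _ _ _ _ (dmul _ _ _ _ _ Hc I1) (dmul _ _ _ _ _ Hs' R1))].
    intros x; unfold psi; cunf; rewrite cos_neg, sin_neg; ring. ring. }
assert (Hc : forall (f : R -> R), (forall s, 0 <= s <= T -> is_derive f s 0) -> f t = f 0).
{ intros f Hf.
  assert (f t <= f 0). { apply (mono_le f (fun _ => 0) T). intros s Hs. split; [apply Hf; auto|lra]. auto. }
  assert (- f t <= - f 0).
  { apply (mono_le (fun s => - f s) (fun _ => 0) T). intros s Hs. split; [|lra].
    eapply dext; [| |apply (is_derive_opp f s 0 (Hf s Hs))]. intros; reflexivity. simpl. unfold opp; simpl. ring. auto. }
  lra. }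
assert (Hp : psi t = psi 0).
{ apply C_ext. apply (Hc (fun s => Re (psi s))). intros; apply Hd; auto.
  apply (Hc (fun s => Im (psi s))). intros; apply Hd; auto. }
unfold psi in Hp. rewrite Rmult_0_r, Ropp_0, cis_0, Cmult_1_l in Hp.
rewrite <- Hp. rewrite Cmult_assoc, cis_add. replace (mu * t + - (mu * t)) with 0 by ring.
rewrite cis_0, Cmult_1_l. reflexivity.
Qed.

Lemma pow_le_B x B n N : 0 <= x <= B -> 1 <= B -> (n <= N)%nat -> x ^ n <= B ^ N.
Proof. intros Hx HB Hn. apply Rle_trans with (B ^ n). apply pow_incr; auto. apply Rle_pow; auto. Qed.

Lemma rsum_bound n (F : nat -> R) K :
  (forall i, (i < n)%nat -> Rabs (F i) <= K) -> Rabs (rsum n F) <= INR n * K.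
Proof.
induction n; intros H; cbn [rsum csum1].
- rewrite Rabs_R0. simpl INR. lra.
- eapply Rle_trans. apply Rabs_triang.
  rewrite S_INR. assert (Rabs (rsum n F) <= INR n * K) by (apply IHn; intros; apply H; lia).
  assert (Rabs (F n) <= K) by (apply H; lia). lra.
Qed.

Lemma rsum_nonneg n (F : nat -> R) : (forall i, 0 <= F i) -> 0 <= rsum n F.
Proof. induction n; intros H; cbn [rsum csum1]. lra. specialize (IHn H). specialize (H n). lra. Qed.

Lemma tri_sum_bound q F K :
  0 <= K ->
  (forall p1 p2 p3, (2 * p2 + p3 <= q)%nat -> p1 = (q - 2 * p2 - p3)%nat -> Rabs (F p1 p2 p3) <= K) ->
  Rabs (tri_sum q F) <= INR (S q) * (2 * K).
Proof.
intros HK H. unfold tri_sum. apply rsum_bound. intros p2 Hp2.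
replace (2 * K) with (INR 2 * K) by (simpl; ring). apply rsum_bound. intros p3 Hp3.
destruct (Nat.leb (2 * p2 + p3) q) eqn:E.
- apply Nat.leb_le in E. apply H; auto.
- rewrite Rabs_R0. auto.
Qed.

Lemma csum1_bound n (F : nat -> C) K :
  (forall k, (1 <= k <= n)%nat -> Cmod (F k) <= K) -> Cmod (csum1 n F) <= INR n * K.
Proof.
induction n; intros H; cbn [rsum csum1].
- rewrite Cmod_0. simpl INR. lra.
- eapply Rle_trans. apply Cmod_triangle.
  rewrite S_INR. assert (Cmod (csum1 n F) <= INR n * K) by (apply IHn; intros; apply H; lia).
  assert (Cmod (F (S n)) <= K) by (apply H; lia). lra.
Qed.

Lemma gpm_bound (lambda : R) (p : nat) (M : R) :
  0 <= M -> exists G, 0 <= G /\ forall a b, 0 <= a <= M -> 0 <= b <= M ->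
    Rabs (g_plus lambda p a b) <= G /\ Rabs (g_minus lambda p a b) <= G.
Proof.
intros HM. set (Bb := 1 + 2 * M + M * M).
assert (HB : 1 <= Bb) by (unfold Bb; nra).
set (K := Rabs lambda * (Bb ^ p * Bb ^ p * Bb ^ p)).
assert (HK : 0 <= K). { unfold K. apply Rmult_le_pos. apply Rabs_pos.
  assert (0 <= Bb ^ p) by (apply pow_le; lra). nra. }
exists (INR (S p) * (2 * K)). split.
{ apply Rmult_le_pos. apply pos_INR. lra. }
intros a b Ha Hb.
assert (Hterm : forall x y z, 0 <= x <= Bb -> 0 <= y <= Bb -> 0 <= z <= Bb ->
  forall p1 p2 p3, (2 * p2 + p3 <= p)%nat -> p1 = (p - 2 * p2 - p3)%nat ->
  Rabs (lambda * x ^ p1 * y ^ p2 * z ^ p3) <= K).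
{ intros x y z Hx Hy Hz p1 p2 p3 H1 H2.
  rewrite !Rabs_mult. rewrite (Rabs_pos_eq (x ^ p1)), (Rabs_pos_eq (y ^ p2)), (Rabs_pos_eq (z ^ p3)) by (apply pow_le; lra).
  unfold K. rewrite !Rmult_assoc. apply Rmult_le_compat_l. apply Rabs_pos.
  assert (x ^ p1 <= Bb ^ p) by (apply pow_le_B; auto; lia).
  assert (y ^ p2 <= Bb ^ p) by (apply pow_le_B; auto; lia).
  assert (z ^ p3 <= Bb ^ p) by (apply pow_le_B; auto; lia).
  assert (0 <= x ^ p1) by (apply pow_le; lra). assert (0 <= y ^ p2) by (apply pow_le; lra).
  assert (0 <= z ^ p3) by (apply pow_le; lra).
  apply Rmult_le_compat; try nra. }
split; apply tri_sum_bound; auto; intros; apply Hterm; auto; unfold Bb; nra.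
Qed.

Lemma gk_bound (lambda : R) (p : nat) (M : R) :
  0 <= M -> exists G, 0 <= G /\ forall k a b, (k <= p)%nat -> Cmod a <= M -> Cmod b <= M ->
    Cmod (g_k lambda p k a b) <= G.
Proof.
intros HM. set (Bb := 1 + 2 * M * M + M).
assert (HB : 1 <= Bb) by (unfold Bb; nra).
set (K := Bb ^ (2*p) * Bb ^ (2*p) * Bb ^ (2*p)).
assert (HK : 0 <= K). { unfold K. assert (0 <= Bb ^ (2*p)) by (apply pow_le; lra). nra. }
exists (Rabs lambda * Bb ^ (S p) * Bb ^ p * (INR (S p) * (2 * K))). split.
{ assert (0 <= Bb ^ (S p)) by (apply pow_le; lra). assert (0 <= Bb ^ p) by (apply pow_le; lra).
  pose proof (Rabs_pos lambda). pose proof (pos_INR (S p)).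
  apply Rmult_le_pos; [|nra]. apply Rmult_le_pos; [|lra]. apply Rmult_le_pos; lra. }
intros k a b Hk Ha Hb.
pose proof (Cmod_ge_0 a). pose proof (Cmod_ge_0 b).
unfold g_k. rewrite !Cmod_mult, !Cmod_R, !Cmod_pow.
assert (HS : Rabs (g_k_sum lambda p k a b) <= INR (S p) * (2 * K)).
{ eapply Rle_trans. unfold g_k_sum. apply tri_sum_bound. exact HK.
  - intros p1 p2 p3 H1 H2. rewrite !Rabs_mult.
    rewrite (Rabs_pos_eq ((Cmod a ^ 2 + Cmod b ^ 2) ^ p1)), (Rabs_pos_eq (Cmod a ^ (2 * p2))), (Rabs_pos_eq (Cmod b ^ (2 * p2 + 2 * p3))) by (apply pow_le; nra).
    assert (Cmod a ^ 2 + Cmod b ^ 2 <= Bb) by (unfold Bb; nra).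
    assert ((Cmod a ^ 2 + Cmod b ^ 2) ^ p1 <= Bb ^ (2*p)) by (apply pow_le_B; try split; auto; nra || lia).
    assert (Cmod a ^ (2 * p2) <= Bb ^ (2*p)) by (apply pow_le_B; try split; auto; unfold Bb; nra || lia).
    assert (Cmod b ^ (2 * p2 + 2 * p3) <= Bb ^ (2*p)) by (apply pow_le_B; try split; auto; unfold Bb; nra || lia).
    assert (0 <= (Cmod a ^ 2 + Cmod b ^ 2) ^ p1) by (apply pow_le; nra).
    assert (0 <= Cmod a ^ (2 * p2)) by (apply pow_le; nra).
    assert (0 <= Cmod b ^ (2 * p2 + 2 * p3)) by (apply pow_le; nra).
    unfold K. apply Rmult_le_compat; try nra.
  - apply Rmult_le_compat_r. lra. apply le_INR. lia. }
assert (Cmod a ^ S k <= Bb ^ S p) by (apply pow_le_B; try split; auto; unfold Bb; nra || lia).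
assert (Cmod b ^ k <= Bb ^ p) by (apply pow_le_B; try split; auto; unfold Bb; nra || lia).
assert (0 <= Cmod a ^ S k) by (apply pow_le; nra). assert (0 <= Cmod b ^ k) by (apply pow_le; nra).
pose proof (Rabs_pos lambda). pose proof (Rabs_pos (g_k_sum lambda p k a b)).
assert (Rabs lambda * Cmod a ^ S k <= Rabs lambda * Bb ^ S p) by (apply Rmult_le_compat_l; lra).
assert (Rabs lambda * Cmod a ^ S k * Cmod b ^ k <= Rabs lambda * Bb ^ S p * Bb ^ p)
  by (apply Rmult_le_compat; try nra).
apply Rmult_le_compat; try nra. apply Rmult_le_pos; [apply Rmult_le_pos|]; lra.
Qed.

Lemma pow_diff (x y R : R) n : 0 <= x <= R -> 0 <= y <= R ->
  Rabs (x ^ n - y ^ n) <= INR n * (R + 1) ^ n * Rabs (x - y).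
Proof.
intros Hx Hy. induction n.
- simpl. rewrite Rminus_eq_0, Rabs_R0. lra.
- replace (x ^ S n - y ^ S n) with (x * (x ^ n - y ^ n) + y ^ n * (x - y)) by (simpl; ring).
  eapply Rle_trans. apply Rabs_triang. rewrite !Rabs_mult.
  rewrite (Rabs_pos_eq x) by lra. rewrite (Rabs_pos_eq (y ^ n)) by (apply pow_le; lra).
  assert (y ^ n <= (R+1) ^ n) by (apply pow_incr; lra).
  assert (1 <= (R+1)^n) by (apply pow_R1_Rle; lra).
  pose proof (Rabs_pos (x - y)). pose proof (Rabs_pos (x ^ n - y ^ n)). pose proof (pos_INR n).
  assert (x * Rabs (x ^ n - y ^ n) <= (R+1) * (INR n * (R + 1) ^ n * Rabs (x - y))).
  { apply Rmult_le_compat; lra. }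
  assert (y ^ n * Rabs (x - y) <= (R+1)^n * Rabs (x - y)) by (apply Rmult_le_compat_r; lra).
  assert ((R+1)^n * Rabs (x - y) <= (R+1) * ((R+1)^n * Rabs (x - y))).
  { rewrite <- (Rmult_1_l ((R+1)^n * Rabs (x - y))) at 1. apply Rmult_le_compat_r. nra. lra. }
  replace (INR (S n) * (R + 1) ^ S n * Rabs (x - y)) with
    ((R+1) * (INR n * (R + 1) ^ n * Rabs (x - y)) + (R+1) * ((R+1)^n * Rabs (x - y))) by (rewrite S_INR; simpl; ring).
  lra.
Qed.

Lemma Cmod_rev (a b : C) : Rabs (Cmod a - Cmod b) <= Cmod (a - b).
Proof.
assert (Cmod a <= Cmod (a - b) + Cmod b).
{ replace a with ((a - b) + b)%C at 1 by ring. apply Cmod_triangle. }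
assert (Cmod b <= Cmod (a - b) + Cmod a).
{ replace b with (-(a - b) + a)%C at 1 by ring. eapply Rle_trans. apply Cmod_triangle. rewrite Cmod_opp. lra. }
apply Rabs_le. lra.
Qed.

Lemma ffun_lip (lambda : R) (p : nat) (R0 : R) : 0 <= R0 ->
  exists L, 0 <= L /\ forall a b, Cmod a <= R0 -> Cmod b <= R0 ->
    Cmod (ffun lambda p a - ffun lambda p b) <= L * Cmod (a - b).
Proof.
intros HR.
set (L1 := Rabs lambda * (R0 ^ 2) ^ p).
set (L2 := Rabs lambda * (INR p * (R0 ^ 2 + 1) ^ p) * (2 * R0) * R0).
assert (0 <= (R0^2)^p) by (apply pow_le; nra).
assert (0 <= (R0^2+1)^p) by (apply pow_le; nra).
pose proof (pos_INR p). pose proof (Rabs_pos lambda).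
exists (L1 + L2). split.
{ unfold L1, L2. apply Rplus_le_le_0_compat. nra.
  apply Rmult_le_pos; [|lra]. apply Rmult_le_pos; [|lra]. apply Rmult_le_pos; nra. }
intros a b Ha Hb. pose proof (Cmod_ge_0 a). pose proof (Cmod_ge_0 b). pose proof (Cmod_ge_0 (a - b)).
set (ga := gfun lambda p (Cmod a ^ 2)). set (gb := gfun lambda p (Cmod b ^ 2)).
assert (E : (ffun lambda p a - ffun lambda p b = RtoC ga * (a - b) + RtoC (ga - gb) * b)%C).
{ unfold ffun. fold ga gb. rewrite RtoC_minus. ring. }
rewrite E. eapply Rle_trans. apply Cmod_triangle. rewrite !Cmod_mult, !Cmod_R.
assert (Hga : Rabs ga <= L1).
{ unfold ga, gfun, L1. rewrite Rabs_mult. apply Rmult_le_compat_l. lra.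
  rewrite Rabs_pos_eq by (apply pow_le; nra). apply pow_incr. nra. }
assert (Hgab : Rabs (ga - gb) <= Rabs lambda * (INR p * (R0 ^ 2 + 1) ^ p) * (2 * R0) * Cmod (a - b)).
{ unfold ga, gb, gfun. replace (lambda * (Cmod a ^ 2) ^ p - lambda * (Cmod b ^ 2) ^ p)
    with (lambda * ((Cmod a ^ 2) ^ p - (Cmod b ^ 2) ^ p)) by ring.
  rewrite Rabs_mult. rewrite !Rmult_assoc. apply Rmult_le_compat_l. lra.
  eapply Rle_trans. apply (pow_diff _ _ (R0^2)); split; nra.
  rewrite <- Rmult_assoc. apply Rmult_le_compat_l. nra.
  replace (Cmod a ^ 2 - Cmod b ^ 2) with ((Cmod a - Cmod b) * (Cmod a + Cmod b)) by ring.
  rewrite Rabs_mult. rewrite (Rabs_pos_eq (Cmod a + Cmod b)) by lra.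
  pose proof (Cmod_rev a b). pose proof (Rabs_pos (Cmod a - Cmod b)).
  replace (2 * (R0 * Cmod (a - b))) with (Cmod (a - b) * (2 * R0)) by ring. apply Rmult_le_compat; lra. }
assert (Rabs ga * Cmod (a - b) <= L1 * Cmod (a - b)) by (apply Rmult_le_compat_r; lra).
assert (Rabs (ga - gb) * Cmod b <= Rabs lambda * (INR p * (R0 ^ 2 + 1) ^ p) * (2 * R0) * Cmod (a - b) * R0).
{ apply Rmult_le_compat; auto. apply Rabs_pos. }
unfold L2. nra.
Qed.

Lemma wfun_bound eps a b s : Cmod (wfun eps a b s) <= Cmod a + Cmod b.
Proof.
unfold wfun. eapply Rle_trans. apply Cmod_triangle.
rewrite !Cmod_mult, !Cmod_cis, Cmod_conj. lra.
Qed.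

Lemma z0_bound (eps M : R) (yn ydn : C) : 0 < eps -> Cmod yn <= M -> Cmod ydn <= M / eps ^ 2 ->
  Cmod (z_plus0 eps yn ydn) <= M /\ Cmod (z_minus0 eps yn ydn) <= M.
Proof.
intros He Hy Hd.
assert (He2 : 0 < eps ^ 2) by (apply pow_lt; lra).
assert (Hd' : eps ^ 2 * Cmod ydn <= M).
{ apply Rmult_le_compat_l with (r := eps^2) in Hd; [|lra].
  replace (eps ^ 2 * (M / eps ^ 2)) with M in Hd by (field; lra). lra. }
assert (Hci : forall x : C, Cmod (Ci * RtoC (eps ^ 2) * x) = eps ^ 2 * Cmod x).
{ intros x. rewrite !Cmod_mult, Cmod_Ci, Cmod_R, Rabs_pos_eq by lra. ring. }
assert (H2 : Cmod (RtoC (/ 2)) = / 2) by (rewrite Cmod_R; apply Rabs_pos_eq; lra).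
unfold z_plus0, z_minus0. split; rewrite Cmod_mult, H2.
- assert (Cmod (yn - Ci * RtoC (eps ^ 2) * ydn) <= Cmod yn + eps^2 * Cmod ydn).
  { unfold Cminus. eapply Rle_trans. apply Cmod_triangle. rewrite Cmod_opp, Hci. lra. }
  lra.
- assert (Cmod (Cconj yn - Ci * RtoC (eps ^ 2) * Cconj ydn) <= Cmod yn + eps^2 * Cmod ydn).
  { unfold Cminus. eapply Rle_trans. apply Cmod_triangle. rewrite Cmod_opp, Hci, !Cmod_conj. lra. }
  lra.
Qed.


Definition osc (lambda : R) (p : nat) (eps : R) (zp zm : C) (t : R) : C :=
  csum1 p (fun k =>
      g_k lambda p k zp zm * cis (INR (2 * k + 1) * t / eps ^ 2)
      + Cconj (g_k lambda p k zm zp) * cis (- (INR (2 * k + 1) * t / eps ^ 2)))%C.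

Lemma g_r_osc lambda p eps zp zm r s :
  g_r lambda p eps zp zm r s = (osc lambda p eps zp zm s + hfun lambda p eps zp zm r s)%C.
Proof. reflexivity. Qed.

Lemma cder_ext (f : R -> C) t (a b : C) : a = b -> is_derive f t a -> is_derive f t b.
Proof. intros; subst; auto. Qed.

Lemma der_cplus (f g : R -> C) t a b : is_derive f t a -> is_derive g t b ->
  is_derive (fun x => (f x + g x)%C) t (a + b)%C.
Proof. intros Ha Hb. apply (is_derive_plus f g t a b Ha Hb). Qed.

Lemma der_csum1 n (F F' : nat -> R -> C) t :
  (forall k, is_derive (F k) t (F' k t)) ->
  is_derive (fun s => csum1 n (fun k => F k s)) t (csum1 n (fun k => F' k t)).
Proof.
intros H. induction n; cbn [csum1].
- apply @is_derive_const.
- apply der_cplus. auto. apply H.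
Qed.

Lemma csum1_ext n F G : (forall k, (1 <= k <= n)%nat -> F k = G k) -> csum1 n F = csum1 n G.
Proof. induction n; intros H; cbn [csum1]. auto. rewrite IHn, (H (S n)). auto. lia. intros; apply H; lia. Qed.

Lemma csum1_add n F G : (csum1 n F + csum1 n G)%C = csum1 n (fun k => F k + G k)%C.
Proof. induction n; cbn [csum1]. ring. rewrite <- IHn. ring. Qed.

Lemma csum1_scal n c F : (c * csum1 n F)%C = csum1 n (fun k => c * F k)%C.
Proof. induction n; cbn [csum1]. ring. rewrite <- IHn. ring. Qed.

Lemma csum1_zero n : csum1 n (fun _ => RtoC 0) = RtoC 0.
Proof. induction n; cbn [csum1]. auto. rewrite IHn. ring. Qed.

Lemma cpow_cis a x n : Cpow (cis a * x) n = (cis (INR n * a) * Cpow x n)%C.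
Proof.
induction n.
- simpl. rewrite Rmult_0_l, cis_0. ring.
- rewrite Cpow_S, IHn, Cpow_S. rewrite S_INR.
  replace (cis ((INR n + 1) * a)) with (cis a * cis (INR n * a))%C by (rewrite cis_add; f_equal; ring).
  ring.
Qed.

Lemma Cmod_cis_mult a x : Cmod (cis a * x) = Cmod x.
Proof. rewrite Cmod_mult, Cmod_cis. ring. Qed.

Lemma gk_rot lambda p k a b x y :
  g_k lambda p k (cis a * x) (cis b * y) = (cis (INR (S k) * a + INR k * b) * g_k lambda p k x y)%C.
Proof.
unfold g_k, g_k_sum. rewrite !Cmod_cis_mult, !cpow_cis.
rewrite <- cis_add. ring.
Qed.

Lemma key_term (A x : C) (nu om2 e : R) : e <> 0 -> om2 - nu^2 <> 0 ->
  (Ci * RtoC nu * (Ci * RtoC nu * (RtoC (- / (e * (om2 - nu^2))) * A)) * x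
   + RtoC om2 * (RtoC (- / (e * (om2 - nu^2))) * A * x) + RtoC (/ e) * (A * x))%C = RtoC 0.
Proof.
intros He Hn. destruct A as [a1 a2], x as [x1 x2]. apply C_ext; cunf; field; (split; [auto|]); intros Hc; apply Hn; simpl; lra.
Qed.

Lemma freq_bound (kk c eps Mu alpha : R) :
  3 <= kk -> 0 <= alpha -> 0 <= Mu -> 0 < eps <= 1 -> Rabs c <= kk * Mu ->
  eps ^ 2 * Mu <= / 4 -> eps ^ 2 * alpha <= 1 ->
  let nu := kk / eps ^ 2 + c in
  let om2 := (alpha + / eps ^ 2) / eps ^ 2 in
  3 <= eps ^ 4 * (nu ^ 2 - om2) /\ Rabs (eps ^ 2 * nu) <= kk * (1 + Mu).
Proof.
intros Hk Ha HM He Hc H1 H2 nu om2.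
assert (He2 : 0 < eps ^ 2) by (apply pow_lt; lra).
assert (He21 : eps ^ 2 <= 1) by (rewrite <- (pow1 2); apply pow_incr; lra).
assert (Hn : eps ^ 2 * nu = kk + eps ^ 2 * c) by (unfold nu; field; lra).
assert (Ho : eps ^ 4 * om2 = eps ^ 2 * alpha + 1) by (unfold om2; field; lra).
pose proof (Rle_abs c). pose proof (Rle_abs (-c)). rewrite Rabs_Ropp in *.
assert (eps^2 * c <= kk / 4). { assert (eps^2 * c <= eps^2 * (kk * Mu)) by (apply Rmult_le_compat_l; lra). nra. }
assert (- (kk / 4) <= eps^2 * c). { assert (eps^2 * (-c) <= eps^2 * (kk * Mu)) by (apply Rmult_le_compat_l; lra). nra. }
split.
- replace (eps ^ 4 * (nu ^ 2 - om2)) with ((eps ^ 2 * nu) ^ 2 - eps ^ 4 * om2) by ring.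
  rewrite Hn, Ho. nra.
- rewrite Hn. apply Rabs_le.
  assert (eps^2 * c <= kk * Mu). { assert (eps^2 * c <= eps^2 * (kk * Mu)) by (apply Rmult_le_compat_l; lra). nra. }
  assert (- (kk * Mu) <= eps^2 * c). { assert (eps^2 * (-c) <= eps^2 * (kk * Mu)) by (apply Rmult_le_compat_l; lra). nra. }
  split; nra.
Qed.

Lemma cis_arg a b : a = b -> cis a = cis b.
Proof. intros; subst; auto. Qed.

Lemma osc_explicit lambda p eps mup mum zp0 zm0 t : eps <> 0 ->
  osc lambda p eps (cis (mup * t) * zp0) (cis (mum * t) * zm0) t =
  csum1 p (fun k =>
    g_k lambda p k zp0 zm0 * cis ((INR (2*k+1) / eps^2 + (INR (S k) * mup + INR k * mum)) * t)
    + Cconj (g_k lambda p k zm0 zp0) * cis (- (INR (2*k+1) / eps^2 + (INR (S k) * mum + INR k * mup)) * t))%C.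
Proof.
intros He. unfold osc. apply csum1_ext. intros k Hk.
rewrite !gk_rot, Cmult_conj, cis_conj.
f_equal.
- rewrite (Cmult_comm (cis _) (g_k _ _ _ _ _)), <- Cmult_assoc, cis_add. f_equal.
  apply cis_arg. field; auto.
- rewrite (Cmult_comm (cis _) (Cconj _)), <- Cmult_assoc, cis_add. f_equal.
  apply cis_arg. field; auto.
Qed.

Lemma Cmod_RtoC_mult (x : R) (z : C) : Cmod (RtoC x * z) = Rabs x * Cmod z.
Proof. rewrite Cmod_mult, Cmod_R. auto. Qed.

Lemma P_exists lambda p alpha Mu Kg eps mup mum zp0 zm0 :
  0 <= alpha -> 0 <= Mu -> 0 <= Kg -> 0 < eps <= 1 -> Rabs mup <= Mu -> Rabs mum <= Mu ->
  (forall k, (k <= p)%nat -> Cmod (g_k lambda p k zp0 zm0) <= Kg /\ Cmod (g_k lambda p k zm0 zp0) <= Kg) ->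
  exists P P1 P2 : R -> C,
   (forall t, is_derive P t (P1 t) /\ is_derive P1 t (P2 t)) /\
   (forall t, Cmod (P t) <= 2 * INR p * Kg * eps^2 /\
              Cmod (P1 t) <= 2 * INR p * Kg * ((2 * INR p + 1) * (1 + Mu))) /\
   (forall t, Cmod (P2 t + RtoC ((alpha + / eps^2)/eps^2) * P t
        + RtoC (/ eps^2) * osc lambda p eps (cis (mup * t) * zp0) (cis (mum * t) * zm0) t)%C
      <= 2 * INR p * Kg * (4 * Mu + alpha + 1)).
Proof.
intros Ha HMu HKg He Hmup Hmum Hg.
assert (He2 : 0 < eps ^ 2) by (apply pow_lt; lra).
assert (He21 : eps ^ 2 <= 1) by (rewrite <- (pow1 2); apply pow_incr; lra).
assert (Hpos : 0 <= 2 * INR p * Kg) by (pose proof (pos_INR p); nra).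
set (om2 := (alpha + / eps^2)/eps^2).
destruct (Rle_dec (eps^2 * (4 * Mu + alpha + 1)) 1) as [Hsmall|Hlarge].
2:{
  exists (fun _ => RtoC 0), (fun _ => RtoC 0), (fun _ => RtoC 0).
  split; [intros; split; apply @is_derive_const|].
  split.
  { intros t; rewrite Cmod_0. split. apply Rmult_le_pos; lra. pose proof (pos_INR p). assert (0 <= (2 * INR p + 1) * (1 + Mu)) by nra. apply Rmult_le_pos; lra. }
  intros t. rewrite Cmult_0_r, !Cplus_0_l, Cmod_RtoC_mult.
  rewrite Rabs_pos_eq by (apply Rlt_le, Rinv_0_lt_compat; lra).
  assert (Ho : Cmod (osc lambda p eps (cis (mup * t) * zp0) (cis (mum * t) * zm0) t) <= INR p * (2 * Kg)).
  { unfold osc. apply csum1_bound. intros k Hk.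
    eapply Rle_trans. apply Cmod_triangle.
    rewrite !Cmod_mult, !Cmod_cis, Cmod_conj, !gk_rot, !Cmod_cis_mult.
    destruct (Hg k) as [G1 G2]. lia. lra. }
  assert (/ eps ^ 2 <= 4 * Mu + alpha + 1).
  { apply Rnot_le_lt in Hlarge. rewrite <- (Rmult_1_l (/ eps^2)).
    apply Rmult_le_reg_l with (eps^2). lra. field_simplify; lra. }
  pose proof (Cmod_ge_0 (osc lambda p eps (cis (mup * t) * zp0) (cis (mum * t) * zm0) t)).
  assert (/ eps ^ 2 * Cmod (osc lambda p eps (cis (mup * t) * zp0) (cis (mum * t) * zm0) t)
          <= (4 * Mu + alpha + 1) * (INR p * (2 * Kg))).
  { apply Rmult_le_compat; try lra. apply Rlt_le, Rinv_0_lt_compat; lra. }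
  nra. }
assert (H1 : eps ^ 2 * Mu <= / 4) by nra.
assert (H2 : eps ^ 2 * alpha <= 1) by nra.
set (nu := fun k : nat => INR (2*k+1) / eps^2 + (INR (S k) * mup + INR k * mum)).
set (nu' := fun k : nat => - (INR (2*k+1) / eps^2 + (INR (S k) * mum + INR k * mup))).
set (A := fun k : nat => g_k lambda p k zp0 zm0).
set (Bc := fun k : nat => Cconj (g_k lambda p k zm0 zp0)).
set (co := fun v : R => RtoC (- / (eps^2 * (om2 - v^2)))).
assert (Hfreq : forall k, (1 <= k <= p)%nat -> forall v, (v = nu k \/ v = nu' k) ->
   Rabs (- / (eps^2 * (om2 - v^2))) <= eps^2 / 3 /\ Rabs v * Rabs (- / (eps^2 * (om2 - v^2))) <= (2 * INR p + 1) * (1 + Mu) /\ om2 - v^2 <> 0).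
{ intros k Hk v Hv.
  assert (Hkk : 3 <= INR (2*k+1)). { replace 3 with (INR 3) by (simpl; ring). apply le_INR. lia. }
  assert (Hkp : INR (2*k+1) <= 2 * INR p + 1).
  { replace (2 * INR p + 1) with (INR (2*p+1)) by (rewrite plus_INR, mult_INR; simpl; ring). apply le_INR. lia. }
  assert (Hc : exists c, Rabs c <= INR (2*k+1) * Mu /\ v ^ 2 = (INR (2*k+1) / eps^2 + c) ^ 2).
  { assert (HSk : INR (S k) + INR k = INR (2*k+1)) by (rewrite S_INR, plus_INR, mult_INR; simpl; ring).
    pose proof (pos_INR k). pose proof (pos_INR (S k)).
    destruct Hv as [Hv|Hv]; subst v.
    - exists (INR (S k) * mup + INR k * mum). split; [|reflexivity].
      eapply Rle_trans. apply Rabs_triang. rewrite !Rabs_mult, (Rabs_pos_eq (INR (S k))), (Rabs_pos_eq (INR k)) by lra.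
      assert (INR (S k) * Rabs mup <= INR (S k) * Mu) by (apply Rmult_le_compat_l; lra).
      assert (INR k * Rabs mum <= INR k * Mu) by (apply Rmult_le_compat_l; lra). rewrite <- HSk; lra.
    - exists (INR (S k) * mum + INR k * mup). split; [|unfold nu'; ring].
      eapply Rle_trans. apply Rabs_triang. rewrite !Rabs_mult, (Rabs_pos_eq (INR (S k))), (Rabs_pos_eq (INR k)) by lra.
      assert (INR (S k) * Rabs mum <= INR (S k) * Mu) by (apply Rmult_le_compat_l; lra).
      assert (INR k * Rabs mup <= INR k * Mu) by (apply Rmult_le_compat_l; lra). rewrite <- HSk; lra. }
  destruct Hc as [c [Hc Hv2]].
  destruct (freq_bound (INR (2*k+1)) c eps Mu alpha Hkk Ha HMu He Hc H1 H2) as [F1 F2].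
  fold om2 in F1. rewrite <- Hv2 in F1.
  assert (Hv2' : Rabs (eps ^ 2 * v) = Rabs (eps^2 * (INR (2 * k + 1) / eps ^ 2 + c))).
  { rewrite !Rabs_mult. f_equal. apply Rsqr_eq_abs_0. unfold Rsqr. replace (v * v) with (v ^ 2) by ring. rewrite Hv2. ring. }
  rewrite <- Hv2' in F2.
  assert (Hd : eps ^ 2 * (om2 - v ^ 2) = - (eps ^ 4 * (v ^ 2 - om2)) / eps^2) by (field; lra).
  set (D := eps ^ 4 * (v ^ 2 - om2)) in *.
  assert (Hco : Rabs (- / (eps ^ 2 * (om2 - v ^ 2))) = eps^2 / D).
  { rewrite Hd. replace (- / (- D / eps ^ 2)) with (eps^2 / D) by (field; split; lra).
    apply Rabs_pos_eq. apply Rlt_le, Rdiv_lt_0_compat; lra. }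
  rewrite Hco. split; [|split].
  -
    unfold Rdiv. apply Rmult_le_compat_l. lra. apply Rinv_le_contravar; lra.
  - replace (Rabs v * (eps ^ 2 / D)) with (Rabs (eps ^ 2 * v) / D)
      by (rewrite Rabs_mult, Rabs_pos_eq by lra; field; lra).
    pose proof (Rabs_pos (eps ^ 2 * v)).
    apply Rle_trans with (Rabs (eps ^ 2 * v)).
    { unfold Rdiv. rewrite <- (Rmult_1_r (Rabs (eps ^ 2 * v))) at 2. apply Rmult_le_compat_l. lra.
      rewrite <- Rinv_1. apply Rinv_le_contravar; lra. }
    eapply Rle_trans. exact F2. apply Rmult_le_compat_r; lra.
  - intros Hz. unfold D in F1. replace (v ^ 2 - om2) with (- (om2 - v^2)) in F1 by ring. rewrite Hz in F1. lra. }
exists (fun t => csum1 p (fun k => co (nu k) * A k * cis (nu k * t) + co (nu' k) * Bc k * cis (nu' k * t))%C).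
exists (fun t => csum1 p (fun k => Ci * RtoC (nu k) * (co (nu k) * A k) * cis (nu k * t)
                        + Ci * RtoC (nu' k) * (co (nu' k) * Bc k) * cis (nu' k * t))%C).
exists (fun t => csum1 p (fun k => Ci * RtoC (nu k) * (Ci * RtoC (nu k) * (co (nu k) * A k)) * cis (nu k * t)
                        + Ci * RtoC (nu' k) * (Ci * RtoC (nu' k) * (co (nu' k) * Bc k)) * cis (nu' k * t))%C).
split; [|split].
- intros t. split.
  + refine (der_csum1 p (fun k s => co (nu k) * A k * cis (nu k * s) + co (nu' k) * Bc k * cis (nu' k * s))%C
       (fun k s => Ci * RtoC (nu k) * (co (nu k) * A k) * cis (nu k * s)
                        + Ci * RtoC (nu' k) * (co (nu' k) * Bc k) * cis (nu' k * s))%C t _).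
    intros k. apply der_cplus; apply der_cis.
  + refine (der_csum1 p (fun k s => Ci * RtoC (nu k) * (co (nu k) * A k) * cis (nu k * s)
                        + Ci * RtoC (nu' k) * (co (nu' k) * Bc k) * cis (nu' k * s))%C
       (fun k s => Ci * RtoC (nu k) * (Ci * RtoC (nu k) * (co (nu k) * A k)) * cis (nu k * s)
                        + Ci * RtoC (nu' k) * (Ci * RtoC (nu' k) * (co (nu' k) * Bc k)) * cis (nu' k * s))%C t _).
    intros k. apply der_cplus; apply der_cis.
- intros t. split.
  + replace (2 * INR p * Kg * eps ^ 2) with (INR p * (2 * (eps^2 / 3 * Kg) + 4/3 * eps^2 * Kg)) by field.
    apply csum1_bound. intros k Hk.
    destruct (Hfreq k Hk (nu k) (or_introl eq_refl)) as [F1 _].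
    destruct (Hfreq k Hk (nu' k) (or_intror eq_refl)) as [F1' _].
    destruct (Hg k) as [G1 G2]. lia.
    eapply Rle_trans. apply Cmod_triangle.
    unfold co, A, Bc. rewrite !Cmod_mult, !Cmod_cis, !Cmod_R, Cmod_conj.
    pose proof (Cmod_ge_0 (g_k lambda p k zp0 zm0)). pose proof (Cmod_ge_0 (g_k lambda p k zm0 zp0)).
    assert (Rabs (- / (eps ^ 2 * (om2 - nu k ^ 2))) * Cmod (g_k lambda p k zp0 zm0) <= eps^2/3 * Kg)
      by (apply Rmult_le_compat; auto; apply Rabs_pos).
    assert (Rabs (- / (eps ^ 2 * (om2 - nu' k ^ 2))) * Cmod (g_k lambda p k zm0 zp0) <= eps^2/3 * Kg)
      by (apply Rmult_le_compat; auto; apply Rabs_pos).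
    assert (0 <= eps^2 * Kg) by (apply Rmult_le_pos; lra).
    lra.
  + replace (2 * INR p * Kg * ((2 * INR p + 1) * (1 + Mu))) with (INR p * (2 * ((2 * INR p + 1) * (1 + Mu) * Kg))) by ring.
    apply csum1_bound. intros k Hk.
    destruct (Hfreq k Hk (nu k) (or_introl eq_refl)) as [_ [F2 _]].
    destruct (Hfreq k Hk (nu' k) (or_intror eq_refl)) as [_ [F2' _]].
    destruct (Hg k) as [G1 G2]. lia.
    eapply Rle_trans. apply Cmod_triangle.
    unfold co, A, Bc. rewrite !Cmod_mult, !Cmod_cis, !Cmod_R, Cmod_conj, Cmod_Ci.
    pose proof (Cmod_ge_0 (g_k lambda p k zp0 zm0)). pose proof (Cmod_ge_0 (g_k lambda p k zm0 zp0)).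
    assert (Rabs (nu k) * Rabs (- / (eps ^ 2 * (om2 - nu k ^ 2))) * Cmod (g_k lambda p k zp0 zm0)
            <= (2 * INR p + 1) * (1 + Mu) * Kg)
      by (apply Rmult_le_compat; auto; apply Rmult_le_pos; apply Rabs_pos).
    assert (Rabs (nu' k) * Rabs (- / (eps ^ 2 * (om2 - nu' k ^ 2))) * Cmod (g_k lambda p k zm0 zp0)
            <= (2 * INR p + 1) * (1 + Mu) * Kg)
      by (apply Rmult_le_compat; auto; apply Rmult_le_pos; apply Rabs_pos).
    lra.
- intros t. rewrite (osc_explicit lambda p eps mup mum zp0 zm0 t ltac:(apply Rgt_not_eq; lra)).
  rewrite csum1_scal, csum1_scal, csum1_add, csum1_add.
  rewrite (csum1_ext p _ (fun _ => RtoC 0)).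
  + rewrite csum1_zero, Cmod_0. apply Rmult_le_pos. lra. lra.
  + intros k Hk.
    destruct (Hfreq k Hk (nu k) (or_introl eq_refl)) as [_ [_ F3]].
    destruct (Hfreq k Hk (nu' k) (or_intror eq_refl)) as [_ [_ F3']].
    pose proof (key_term (A k) (cis (nu k * t)) (nu k) om2 (eps^2) ltac:(apply Rgt_not_eq; lra) F3) as K1.
    pose proof (key_term (Bc k) (cis (nu' k * t)) (nu' k) om2 (eps^2) ltac:(apply Rgt_not_eq; lra) F3') as K2.
    fold (co (nu k)) in K1. fold (co (nu' k)) in K2.
    unfold nu, nu', A, Bc in *. 
    rewrite <- (Cplus_0_l (RtoC 0)). rewrite <- K1 at 1. rewrite <- K2.
    replace (- (INR (2 * k + 1) / eps ^ 2 + (INR (S k) * mum + INR k * mup)) * t)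
      with (- (INR (2 * k + 1) / eps ^ 2 + (INR (S k) * mum + INR k * mup)) * t) by reflexivity.
    ring.
Qed.


Lemma eq_rearr (r2 r P2 P O H U : C) (eps alpha : R) : eps <> 0 ->
  (RtoC (eps^2) * r2 + RtoC (alpha + /eps^2) * r + (O + H) + RtoC (eps^2) * U = 0)%C ->
  (r2 - P2 + RtoC ((alpha + /eps^2)/eps^2) * (r - P)
     = - (P2 + RtoC ((alpha + /eps^2)/eps^2) * P + RtoC (/eps^2) * O) - RtoC (/eps^2) * H - U)%C.
Proof.
intros He Hq.
destruct r2 as [a1 a2], r as [b1 b2], P2 as [c1 c2], P as [d1 d2], O as [o1 o2], H as [h1 h2], U as [u1 u2].
cunf. injection Hq; intros E2 E1.
apply C_ext; cunf; apply Rminus_diag_uniq.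
- match type of E1 with ?X = 0 => transitivity (/ eps^2 * X) end. field; auto. rewrite E1; ring.
- match type of E2 with ?X = 0 => transitivity (/ eps^2 * X) end. field; auto. rewrite E2; ring.
Qed.

Lemma eq_r2 (r2 r O H U : C) (eps alpha : R) :
  (RtoC (eps^2) * r2 + RtoC (alpha + /eps^2) * r + (O + H) + RtoC (eps^2) * U = 0)%C ->
  (RtoC (eps^2) * r2 = - (RtoC (alpha + /eps^2) * r + O + H + RtoC (eps^2) * U))%C.
Proof.
intros Hq. destruct r2 as [a1 a2], r as [b1 b2], O as [o1 o2], H as [h1 h2], U as [u1 u2].
cunf. injection Hq; intros E2 E1. apply C_ext; cunf; lra.
Qed.

Lemma Enf_nonneg om2 q q1 t : 0 <= om2 -> 0 <= Enf om2 q q1 t.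
Proof. intros H. unfold Enf. pose proof (pow2_ge_0 (Re (q1 t))). pose proof (pow2_ge_0 (Im (q1 t))).
 pose proof (pow2_ge_0 (Re (q t))). pose proof (pow2_ge_0 (Im (q t))).
 apply Rplus_le_le_0_compat. lra. apply Rmult_le_pos; lra. Qed.

Lemma Enf_q1 om2 q q1 t : 0 <= om2 -> Cmod (q1 t) <= sqrt (Enf om2 q q1 t).
Proof. intros H. unfold Cmod. apply sqrt_le_1_alt. unfold Enf.
 pose proof (pow2_ge_0 (Re (q t))). pose proof (pow2_ge_0 (Im (q t))).
 assert (0 <= om2 * (Re (q t) ^ 2 + Im (q t) ^ 2)) by (apply Rmult_le_pos; lra).
 unfold Re, Im in *. lra. Qed.

Lemma Enf_q alpha eps q q1 t : 0 <= alpha -> 0 < eps ->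
  Cmod (q t) <= eps ^ 2 * sqrt (Enf ((alpha + /eps^2)/eps^2) q q1 t).
Proof.
intros Ha He. assert (He2 : 0 < eps^2) by (apply pow_lt; lra).
set (om2 := (alpha + /eps^2)/eps^2).
assert (Hom : / (eps^2 * eps^2) <= om2).
{ unfold om2. replace ((alpha + / eps ^ 2) / eps ^ 2) with (alpha / eps^2 + / (eps^2 * eps^2)) by (field; lra).
  assert (0 <= alpha / eps^2) by (apply Rdiv_le_0_compat; lra). lra. }
assert (Hi : 0 < / (eps^2 * eps^2)) by (apply Rinv_0_lt_compat; nra).
rewrite <- (sqrt_pow2 (eps^2)) by lra. rewrite <- sqrt_mult by (try apply Enf_nonneg; nra).
unfold Cmod. apply sqrt_le_1_alt. unfold Enf.
pose proof (pow2_ge_0 (Re (q1 t))). pose proof (pow2_ge_0 (Im (q1 t))).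
pose proof (pow2_ge_0 (Re (q t))). pose proof (pow2_ge_0 (Im (q t))).
set (X := Re (q t) ^ 2 + Im (q t) ^ 2).
assert (/ (eps^2 * eps^2) * X <= om2 * X) by (apply Rmult_le_compat_r; unfold X; lra).
assert (Hx : X = (eps^2)^2 * (/ (eps^2 * eps^2) * X)) by (field; lra).
unfold Re, Im in *. fold X. rewrite Hx at 1.
assert (0 <= (eps^2)^2) by nra.
apply Rmult_le_compat_l. auto. lra.
Qed.

Lemma cont_Cmod (r : R -> C) t d : is_derive r t d -> continuity_pt (fun x => Cmod (r x)) t.
Proof.
intros H.
pose proof (is_derive_cont _ _ _ (der_re _ _ _ H)) as C1.
pose proof (is_derive_cont _ _ _ (der_im _ _ _ H)) as C2.
unfold Cmod.
apply (continuity_pt_comp (fun x => Re (r x) ^ 2 + Im (r x) ^ 2) sqrt).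
- apply continuity_pt_plus; apply continuity_pt_mult; auto;
  try apply continuity_pt_mult; auto; apply continuity_pt_const; intros ? ?; reflexivity.
- apply continuity_pt_sqrt. pose proof (pow2_ge_0 (Re (r t))). pose proof (pow2_ge_0 (Im (r t))). lra.
Qed.

Lemma z_analysis (z z1 z2 z3 : R -> C) (mu T : R) : 0 < T ->
  (forall t, 0 <= t <= T -> is_derive z t (z1 t) /\ is_derive z1 t (z2 t) /\ is_derive z2 t (z3 t)
     /\ z1 t = (Ci * RtoC mu * z t)%C) ->
  forall t, 0 <= t <= T -> z t = (cis (mu * t) * z 0)%C /\ Cmod (z t) = Cmod (z 0) /\
    Cmod (z1 t) = Rabs mu * Cmod (z 0) /\ Cmod (z2 t) = Rabs mu * (Rabs mu * Cmod (z 0)) /\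
    Cmod (z3 t) = Rabs mu * (Rabs mu * (Rabs mu * Cmod (z 0))).
Proof.
intros HT H.
assert (Hz : forall t, 0 <= t <= T -> z t = (cis (mu * t) * z 0)%C).
{ apply (explicit_z z z1 mu T). lra. intros t Ht. destruct (H t Ht) as [A1 [_ [_ A4]]]. auto. }
assert (Hz1 : forall t, 0 <= t <= T -> z1 t = (Ci * RtoC mu * z 0 * cis (mu * t))%C).
{ intros t Ht. destruct (H t Ht) as [_ [_ [_ A4]]]. rewrite A4, Hz by auto. ring. }
assert (Hz2 : forall t, 0 <= t <= T -> z2 t = (Ci * RtoC mu * (Ci * RtoC mu * z 0) * cis (mu * t))%C).
{ intros t Ht. destruct (H t Ht) as [_ [A2 _]].
  apply (der_unique_C z1 (fun x => Ci * RtoC mu * z 0 * cis (mu * x))%C t _ _ T A2 (der_cis _ mu t) HT Ht).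
  exact Hz1. }
assert (Hz3 : forall t, 0 <= t <= T -> z3 t = (Ci * RtoC mu * (Ci * RtoC mu * (Ci * RtoC mu * z 0)) * cis (mu * t))%C).
{ intros t Ht. destruct (H t Ht) as [_ [_ [A3 _]]].
  apply (der_unique_C z2 (fun x => Ci * RtoC mu * (Ci * RtoC mu * z 0) * cis (mu * x))%C t _ _ T A3 (der_cis _ mu t) HT Ht).
  exact Hz2. }
intros t Ht. repeat split.
- auto.
- rewrite Hz by auto. rewrite Cmod_mult, Cmod_cis. ring.
- rewrite Hz1 by auto. rewrite !Cmod_mult, Cmod_cis, Cmod_Ci, Cmod_R. ring.
- rewrite Hz2 by auto. rewrite !Cmod_mult, Cmod_cis, Cmod_Ci, Cmod_R. ring.
- rewrite Hz3 by auto. rewrite !Cmod_mult, Cmod_cis, Cmod_Ci, Cmod_R. ring.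
Qed.

Lemma z_eq_mu (z1 z : C) (alpha g mu : R) : mu = / 2 * g + alpha / 2 ->
  (2 * Ci * z1 + RtoC alpha * z + RtoC g * z = 0)%C -> z1 = (Ci * RtoC mu * z)%C.
Proof.
intros Hmu Heq. subst mu. destruct z1 as [a1 a2], z as [b1 b2]. cunf.
injection Heq; intros E2 E1. apply C_ext; cunf; lra.
Qed.

Lemma abs_mu g alpha Gb : 0 <= alpha -> Rabs g <= Gb -> Rabs (/ 2 * g + alpha / 2) <= Gb / 2 + alpha / 2.
Proof.
intros Ha Hg. pose proof (Rle_abs g). pose proof (Rle_abs (-g)). rewrite Rabs_Ropp in *.
apply Rabs_le. lra.
Qed.

Lemma Cmod_sub_le (a b : C) : Cmod (a - b) <= Cmod a + Cmod b.
Proof. unfold Cminus. eapply Rle_trans. apply Cmod_triangle. rewrite Cmod_opp. lra. Qed.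

Theorem lemmaB4 (alpha lambda : R) (p : nat) (C0 : R) :
  0 <= alpha -> 0 <= C0 ->
  exists tau2 K : R, 0 < tau2 /\ 0 < K /\
  forall (eps tau : R) (yn ydn : C)
         (zp zp1 zp2 zp3 zm zm1 zm2 zm3 r r1 r2 : R -> C),
    0 < eps <= 1 -> 0 < tau <= tau2 ->
    Cmod yn <= C0 + 1 -> Cmod ydn <= (C0 + 1) / eps ^ 2 ->
    is_solution alpha lambda p eps tau yn ydn
      zp zp1 zp2 zp3 zm zm1 zm2 zm3 r r1 r2 ->
    forall s, 0 <= s <= tau ->
      Cmod (zp s) <= K /\ Cmod (zp1 s) <= K /\ Cmod (zp2 s) <= K /\ Cmod (zp3 s) <= K /\
      Cmod (zm s) <= K /\ Cmod (zm1 s) <= K /\ Cmod (zm2 s) <= K /\ Cmod (zm3 s) <= K /\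
      Cmod (r s) / eps ^ 2 <= K /\ Cmod (r1 s) <= K /\ eps ^ 2 * Cmod (r2 s) <= K.
Proof.
intros Ha HC0.
set (M := C0 + 1). assert (HM : 0 < M) by (unfold M; lra).
destruct (gpm_bound lambda p (M * M) ltac:(nra)) as [Gb [HGb HGbb]].
set (Mu := Gb / 2 + alpha / 2). assert (HMu : 0 <= Mu) by (unfold Mu; lra).
destruct (gk_bound lambda p M ltac:(lra)) as [Kg [HKg HKgb]].
pose proof (pos_INR p) as Hp.
set (Kosc := INR p * (2 * Kg)). assert (HKosc : 0 <= Kosc) by (unfold Kosc; nra).
set (KP := 2 * INR p * Kg). assert (HKP : 0 <= KP) by (unfold KP; nra).
set (KP1 := 2 * INR p * Kg * ((2 * INR p + 1) * (1 + Mu))).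
assert (HKP1 : 0 <= KP1) by (unfold KP1; apply Rmult_le_pos; [nra|]; apply Rmult_le_pos; lra).
set (KD := 2 * INR p * Kg * (4 * Mu + alpha + 1)).
assert (HKD : 0 <= KD) by (unfold KD; apply Rmult_le_pos; [nra|lra]).
set (Ku := 2 * (Mu * (Mu * M))). assert (HKu : 0 <= Ku) by (unfold Ku; apply Rmult_le_pos; [lra|]; apply Rmult_le_pos; [lra|]; apply Rmult_le_pos; lra).
set (E0m := (2 * Mu * M + KP1) ^ 2 + (1 + alpha) * KP ^ 2).
assert (HE0m : 0 <= E0m) by (unfold E0m; apply Rplus_le_le_0_compat; [apply pow2_ge_0 | apply Rmult_le_pos; [lra | apply pow2_ge_0]]).
set (Em := 2 * (E0m + 1)).
set (B0 := sqrt Em + KP). assert (HB0 : 0 <= B0) by (unfold B0; pose proof (sqrt_pos Em); lra).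
set (B := B0 + 1).
destruct (ffun_lip lambda p (2 * M + B) ltac:(unfold B; lra)) as [Lf [HLf HLfb]].
set (c := KD + Ku + Lf * KP). assert (Hc : 0 <= c) by (unfold c; nra).
set (tau2 := Rmin 1 (Rmin (/ (c^2 + 1)) (ln 2 / (2 * Lf + 1)))).
assert (Hln2 : 0 < ln 2) by (rewrite <- ln_1; apply ln_increasing; lra).
assert (Htau2 : 0 < tau2).
{ unfold tau2. apply Rmin_glb_lt. lra. apply Rmin_glb_lt. apply Rinv_0_lt_compat; nra.
  apply Rdiv_lt_0_compat; lra. }
set (K := M + Mu * M + Mu * (Mu * M) + Mu * (Mu * (Mu * M)) + B0 + (sqrt Em + KP1)
          + ((alpha + 1) * B0 + Kosc + Lf * B + Ku) + 1).
assert (HMuM : 0 <= Mu * M) by nra.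
assert (HMuM2 : 0 <= Mu * (Mu * M)) by nra.
assert (HMuM3 : 0 <= Mu * (Mu * (Mu * M))) by nra.
assert (HsEm : 0 <= sqrt Em) by apply sqrt_pos.
assert (HLfB : 0 <= Lf * B) by (unfold B; nra).
assert (HaB0 : 0 <= (alpha + 1) * B0) by nra.
exists tau2, K. split; [auto|]. split; [unfold K; lra|].
intros eps tau yn ydn zp zp1 zp2 zp3 zm zm1 zm2 zm3 r r1 r2 Heps Htau Hyn Hydn Hsol s Hs.
destruct Hsol as [Hsys [Hzp0 [Hzm0 [Hr0 Hr10]]]].
assert (He2 : 0 < eps^2) by (apply pow_lt; lra).
assert (He21 : eps^2 <= 1) by (rewrite <- (pow1 2); apply pow_incr; lra).
destruct (z0_bound eps M yn ydn ltac:(lra) Hyn Hydn) as [Bzp Bzm].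
set (zp0 := z_plus0 eps yn ydn) in *. set (zm0 := z_minus0 eps yn ydn) in *.
assert (Hmodp : forall t, 0 <= t <= tau -> Cmod (zp t) = Cmod zp0).
{ intros t Ht. rewrite <- Hzp0.
  apply (mod_const zp zp1 (fun t => / 2 * g_plus lambda p (Cmod (zp t) ^ 2) (Cmod (zm t) ^ 2) + alpha / 2) tau); [lra| |auto].
  intros x Hx. destruct (Hsys x Hx) as [D1 [_ [_ [_ [_ [_ [_ [_ [Eq1 _]]]]]]]]].
  split; auto. eapply z_eq_mu; [reflexivity|exact Eq1]. }
assert (Hmodm : forall t, 0 <= t <= tau -> Cmod (zm t) = Cmod zm0).
{ intros t Ht. rewrite <- Hzm0.
  apply (mod_const zm zm1 (fun t => / 2 * g_minus lambda p (Cmod (zp t) ^ 2) (Cmod (zm t) ^ 2) + alpha / 2) tau); [lra| |auto].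
  intros x Hx. destruct (Hsys x Hx) as [_ [_ [_ [D4 [_ [_ [_ [_ [_ [Eq2 _]]]]]]]]]].
  split; auto. eapply z_eq_mu; [reflexivity|exact Eq2]. }
set (mup := mu_plus alpha lambda p eps yn ydn).
set (mum := mu_minus alpha lambda p eps yn ydn).
pose proof (Cmod_ge_0 zp0). pose proof (Cmod_ge_0 zm0).
assert (Hsq : 0 <= Cmod zp0 ^ 2 <= M * M /\ 0 <= Cmod zm0 ^ 2 <= M * M) by (split; split; nra).
destruct (HGbb (Cmod zp0 ^ 2) (Cmod zm0 ^ 2)) as [Hgp Hgm]; try tauto.
assert (Hmup : Rabs mup <= Mu) by (apply abs_mu; auto).
assert (Hmum : Rabs mum <= Mu) by (apply abs_mu; auto).
assert (Zp := z_analysis zp zp1 zp2 zp3 mup tau ltac:(lra)).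
assert (Zm := z_analysis zm zm1 zm2 zm3 mum tau ltac:(lra)).
rewrite Hzp0 in Zp. rewrite Hzm0 in Zm.
specialize (Zp ltac:(intros t Ht; destruct (Hsys t Ht) as [D1 [D2 [D3 [_ [_ [_ [_ [_ [Eq1 _]]]]]]]]];
   refine (conj D1 (conj D2 (conj D3 _))); eapply z_eq_mu; [|exact Eq1]; unfold mup, mu_plus; rewrite Hmodp, Hmodm by auto; reflexivity)).
specialize (Zm ltac:(intros t Ht; destruct (Hsys t Ht) as [_ [_ [_ [D4 [D5 [D6 [_ [_ [_ [Eq2 _]]]]]]]]]];
   refine (conj D4 (conj D5 (conj D6 _))); eapply z_eq_mu; [|exact Eq2]; unfold mum, mu_minus; rewrite Hmodp, Hmodm by auto; reflexivity)).
pose proof (Rabs_pos mup). pose proof (Rabs_pos mum).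
assert (Hzpe : forall t, 0 <= t <= tau -> zp t = (cis (mup * t) * zp0)%C) by (intros; apply Zp; auto).
assert (Hzme : forall t, 0 <= t <= tau -> zm t = (cis (mum * t) * zm0)%C) by (intros; apply Zm; auto).
assert (HzpM : forall t, 0 <= t <= tau -> Cmod (zp t) <= M) by (intros t Ht; rewrite Hmodp; auto).
assert (HzmM : forall t, 0 <= t <= tau -> Cmod (zm t) <= M) by (intros t Ht; rewrite Hmodm; auto).
assert (Hmu2p : Rabs mup * (Rabs mup * Cmod zp0) <= Mu * (Mu * M)).
{ apply Rmult_le_compat; try nra; try (apply Rmult_le_compat; nra). }
assert (Hmu2m : Rabs mum * (Rabs mum * Cmod zm0) <= Mu * (Mu * M)).
{ apply Rmult_le_compat; try nra; try (apply Rmult_le_compat; nra). }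
destruct (P_exists lambda p alpha Mu Kg eps mup mum zp0 zm0 Ha HMu HKg Heps Hmup Hmum) as [P [P1 [P2 [HPd [HPb HPe]]]]].
{ intros k Hk. split; apply HKgb; auto. }
fold KP1 in HPb. fold KD in HPe. fold KP in HPb.
set (om2 := (alpha + / eps^2)/eps^2) in *.
assert (Hom : 0 < om2) by (unfold om2; apply Rdiv_lt_0_compat; [pose proof (Rinv_0_lt_compat _ He2)|]; lra).
set (q := fun t => (r t - P t)%C).
set (q1 := fun t => (r1 t - P1 t)%C).
set (q2 := fun t => (r2 t - P2 t)%C).
set (U := fun t => (cis (t / eps ^ 2) * zp2 t + cis (- (t / eps ^ 2)) * Cconj (zm2 t))%C).
assert (HU : forall t, 0 <= t <= tau -> Cmod (U t) <= Ku).
{ intros t Ht. unfold U. eapply Rle_trans. apply Cmod_triangle.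
  rewrite !Cmod_mult, !Cmod_cis, Cmod_conj.
  destruct (Zp t Ht) as [_ [_ [_ [Z2 _]]]]. destruct (Zm t Ht) as [_ [_ [_ [Z2' _]]]].
  rewrite Z2, Z2'. unfold Ku. lra. }
assert (Hosc : forall t, 0 <= t <= tau -> Cmod (osc lambda p eps (zp t) (zm t) t) <= Kosc).
{ intros t Ht. unfold osc, Kosc. apply csum1_bound. intros k Hk.
  eapply Rle_trans. apply Cmod_triangle.
  rewrite !Cmod_mult, !Cmod_cis, Cmod_conj.
  assert (Cmod (g_k lambda p k (zp t) (zm t)) <= Kg) by (apply HKgb; auto; lia).
  assert (Cmod (g_k lambda p k (zm t) (zp t)) <= Kg) by (apply HKgb; auto; lia).
  lra. }
assert (Hh : forall t, 0 <= t <= tau -> Cmod (r t) <= B ->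
          Cmod (hfun lambda p eps (zp t) (zm t) (r t) t) <= Lf * Cmod (r t)).
{ intros t Ht Hrt. unfold hfun.
  set (w := wfun eps (zp t) (zm t) t).
  assert (Hw : Cmod w <= 2 * M) by (unfold w; eapply Rle_trans; [apply wfun_bound|]; pose proof (HzpM t Ht); pose proof (HzmM t Ht); lra).
  assert (Hwr : Cmod (w + r t) <= 2 * M + B) by (eapply Rle_trans; [apply Cmod_triangle|]; lra).
  replace (Cmod (r t)) with (Cmod ((w + r t) - w)%C) by (f_equal; ring).
  apply HLfb; auto. pose proof (Cmod_ge_0 w). unfold B in *. lra. }
assert (Hrq : forall t, Cmod (r t) <= Cmod (q t) + Cmod (P t)).
{ intros t. replace (r t) with (q t + P t)%C by (unfold q; ring). apply Cmod_triangle. }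
assert (HE0 : Enf om2 q q1 0 <= E0m).
{ unfold Enf. rewrite <- !Cmod2_alt.
  assert (Hq10 : Cmod (q1 0) <= 2 * Mu * M + KP1).
  { unfold q1. eapply Rle_trans. apply Cmod_sub_le. rewrite Hr10.
    assert (Cmod (rdot0 alpha lambda p eps yn ydn) <= 2 * Mu * M).
    { unfold rdot0. fold zp0 zm0 mup mum. eapply Rle_trans. apply Cmod_sub_le.
      rewrite Cmod_opp, Cmod_conj, !Cmod_mult, Cmod_Ci, !Cmod_R.
      assert (Rabs mup * Cmod zp0 <= Mu * M) by (apply Rmult_le_compat; lra).
      assert (Rabs mum * Cmod zm0 <= Mu * M) by (apply Rmult_le_compat; lra). lra. }
    pose proof (proj2 (HPb 0)). lra. }
  assert (Hq0 : Cmod (q 0) <= KP * eps ^ 2).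
  { unfold q. rewrite Hr0. replace (RtoC 0 - P 0)%C with (- P 0)%C by ring. rewrite Cmod_opp. apply HPb. }
  pose proof (Cmod_ge_0 (q1 0)). pose proof (Cmod_ge_0 (q 0)).
  assert (Cmod (q1 0) ^ 2 <= (2 * Mu * M + KP1) ^ 2) by (apply pow_incr; lra).
  assert (Cmod (q 0) ^ 2 <= (KP * eps ^ 2) ^ 2) by (apply pow_incr; lra).
  assert (om2 * Cmod (q 0) ^ 2 <= om2 * (KP * eps ^ 2) ^ 2) by (apply Rmult_le_compat_l; lra).
  assert (Ho : om2 * (KP * eps ^ 2) ^ 2 = (alpha * eps ^ 2 + 1) * KP ^ 2) by (unfold om2; field; lra).
  assert ((alpha * eps ^ 2 + 1) * KP ^ 2 <= (1 + alpha) * KP ^ 2).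
  { apply Rmult_le_compat_r. apply pow2_ge_0. nra. }
  unfold E0m. lra. }
assert (Claim : forall s0, 0 <= s0 <= tau -> (forall t, 0 <= t <= s0 -> Cmod (r t) <= B) ->
          Enf om2 q q1 s0 <= Em).
{ intros s0 Hs0 Hbd.
  assert (HE := energy q q1 q2 om2 c Lf s0 Hom Hc HLf ltac:(lra)).
  assert (Hhyp : forall t, 0 <= t <= s0 -> is_derive q t (q1 t) /\ is_derive q1 t (q2 t) /\
      Cmod (q2 t + RtoC om2 * q t)%C <= c + Lf * sqrt (Enf om2 q q1 t)).
  { intros t Ht. assert (Ht' : 0 <= t <= tau) by lra.
    destruct (Hsys t Ht') as [_ [_ [_ [_ [_ [_ [D7 [D8 [_ [_ Eq3]]]]]]]]]].
    destruct (HPd t) as [P1d P2d].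
    split; [|split].
    - exact (is_derive_minus r P t (r1 t) (P1 t) D7 P1d).
    - exact (is_derive_minus r1 P1 t (r2 t) (P2 t) D8 P2d).
    - pose proof (eq_rearr (r2 t) (r t) (P2 t) (P t) (osc lambda p eps (zp t) (zm t) t)
          (hfun lambda p eps (zp t) (zm t) (r t) t) (U t) eps alpha ltac:(apply Rgt_not_eq; lra) Eq3) as Er.
      fold om2 in Er. change (q2 t + RtoC om2 * q t)%C with (r2 t - P2 t + RtoC om2 * (r t - P t))%C. rewrite Er.
      assert (HD : Cmod (P2 t + RtoC om2 * P t + RtoC (/ eps ^ 2) * osc lambda p eps (zp t) (zm t) t) <= KD).
      { rewrite (Hzpe t Ht'), (Hzme t Ht'). apply HPe. }
      assert (Hrt := Hbd t Ht).
      assert (HH := Hh t Ht' Hrt).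
      assert (Hqt := Enf_q alpha eps q q1 t Ha ltac:(lra)). fold om2 in Hqt.
      assert (HPt := proj1 (HPb t)).
      pose proof (Hrq t).
      assert (Hinv : 0 < / eps ^ 2) by (apply Rinv_0_lt_compat; lra).
      assert (HhB : Cmod (RtoC (/ eps ^ 2) * hfun lambda p eps (zp t) (zm t) (r t) t) <= Lf * (sqrt (Enf om2 q q1 t) + KP)).
      { rewrite Cmod_RtoC_mult, Rabs_pos_eq by lra.
        apply Rle_trans with (/ eps ^ 2 * (Lf * Cmod (r t))). apply Rmult_le_compat_l; lra.
        assert (Cmod (r t) <= eps ^ 2 * (sqrt (Enf om2 q q1 t) + KP)) by lra.
        assert (Lf * Cmod (r t) <= Lf * (eps ^ 2 * (sqrt (Enf om2 q q1 t) + KP))) by (apply Rmult_le_compat_l; lra).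
        assert (/ eps ^ 2 * (Lf * Cmod (r t)) <= / eps ^ 2 * (Lf * (eps ^ 2 * (sqrt (Enf om2 q q1 t) + KP))))
          by (apply Rmult_le_compat_l; lra).
        replace (/ eps ^ 2 * (Lf * (eps ^ 2 * (sqrt (Enf om2 q q1 t) + KP)))) with (Lf * (sqrt (Enf om2 q q1 t) + KP)) in * by (field; lra).
        lra. }
      pose proof (HU t Ht').
      eapply Rle_trans. apply Cmod_sub_le. eapply Rle_trans. apply Rplus_le_compat_r. apply Cmod_sub_le.
      rewrite Cmod_opp. unfold c. lra. }
  specialize (HE Hhyp s0 ltac:(lra)).
  assert (Hcs : c ^ 2 * s0 <= 1).
  { assert (s0 <= / (c^2 + 1)).
    { apply Rle_trans with tau2. lra. unfold tau2. eapply Rle_trans. apply Rmin_r. apply Rmin_l. }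
    assert (c ^ 2 * s0 <= c ^ 2 * / (c ^ 2 + 1)) by (apply Rmult_le_compat_l; [apply pow2_ge_0|lra]).
    assert (c ^ 2 * / (c ^ 2 + 1) <= 1).
    { pose proof (pow2_ge_0 c). apply Rmult_le_reg_r with (c^2 + 1). lra.
      rewrite Rmult_assoc, Rinv_l by lra. lra. }
    lra. }
  assert (Hexp : exp ((2 * Lf + 1) * s0) <= 2).
  { assert (Hsl : s0 <= ln 2 / (2 * Lf + 1)).
    { apply Rle_trans with tau2. lra. unfold tau2. eapply Rle_trans. apply Rmin_r. apply Rmin_r. }
    apply Rle_trans with (exp (ln 2)); [|rewrite exp_ln; lra]. apply exp_mono.
    apply Rmult_le_compat_l with (r := 2 * Lf + 1) in Hsl; [|lra].
    replace ((2 * Lf + 1) * (ln 2 / (2 * Lf + 1))) with (ln 2) in Hsl by (field; lra). lra. }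
  assert (0 <= Enf om2 q q1 0) by (apply Enf_nonneg; lra).
  assert (0 <= c^2 * s0) by (apply Rmult_le_pos; [apply pow2_ge_0|lra]).
  assert ((Enf om2 q q1 0 + c ^ 2 * s0) * exp ((2 * Lf + 1) * s0) <= (E0m + 1) * 2).
  { apply Rmult_le_compat; try lra. left; apply exp_pos. }
  unfold Em. lra. }
assert (Hrbound : forall s0, 0 <= s0 <= tau -> Enf om2 q q1 s0 <= Em -> Cmod (r s0) <= eps ^ 2 * B0).
{ intros s0 Hs0 HE.
  assert (Hqt := Enf_q alpha eps q q1 s0 Ha ltac:(lra)). fold om2 in Hqt.
  assert (sqrt (Enf om2 q q1 s0) <= sqrt Em) by (apply sqrt_le_1_alt; lra).
  assert (eps ^ 2 * sqrt (Enf om2 q q1 s0) <= eps ^ 2 * sqrt Em) by (apply Rmult_le_compat_l; lra).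
  pose proof (Hrq s0). pose proof (proj1 (HPb s0)). unfold B0. lra. }
assert (Hrb : forall t, 0 <= t <= tau -> Cmod (r t) <= B0).
{ apply (bootstrap (fun t => Cmod (r t)) tau B B0); [lra | unfold B; lra | | | ].
  - intros t Ht. destruct (Hsys t Ht) as [_ [_ [_ [_ [_ [_ [D7 _]]]]]]]. exact (cont_Cmod r t _ D7).
  - simpl. rewrite Hr0, Cmod_0. lra.
  - intros s0 Hs0 Hbd. simpl in Hbd |- *.
    assert (Cmod (r s0) <= eps ^ 2 * B0) by (apply Hrbound; auto; apply Claim; auto).
    assert (eps ^ 2 * B0 <= B0) by nra. lra. }
assert (HEs : Enf om2 q q1 s <= Em).
{ apply Claim; auto. intros t Ht. assert (Cmod (r t) <= B0) by (apply Hrb; lra). unfold B; lra. }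
assert (Hrs := Hrbound s Hs HEs).
destruct (Zp s Hs) as [_ [Zp0 [Zp1 [Zp2 Zp3]]]].
destruct (Zm s Hs) as [_ [Zm0 [Zm1 [Zm2 Zm3]]]].
assert (Hmu3p : Rabs mup * (Rabs mup * (Rabs mup * Cmod zp0)) <= Mu * (Mu * (Mu * M))).
{ apply Rmult_le_compat; try nra. }
assert (Hmu3m : Rabs mum * (Rabs mum * (Rabs mum * Cmod zm0)) <= Mu * (Mu * (Mu * M))).
{ apply Rmult_le_compat; try nra. }
assert (Hmu1p : Rabs mup * Cmod zp0 <= Mu * M) by (apply Rmult_le_compat; lra).
assert (Hmu1m : Rabs mum * Cmod zm0 <= Mu * M) by (apply Rmult_le_compat; lra).
assert (Hr1 : Cmod (r1 s) <= sqrt Em + KP1).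
{ replace (r1 s) with (q1 s + P1 s)%C by (unfold q1; ring).
  eapply Rle_trans. apply Cmod_triangle.
  assert (Cmod (q1 s) <= sqrt (Enf om2 q q1 s)) by (apply Enf_q1; lra).
  assert (sqrt (Enf om2 q q1 s) <= sqrt Em) by (apply sqrt_le_1_alt; lra).
  pose proof (proj2 (HPb s)). lra. }
assert (Hr2 : eps ^ 2 * Cmod (r2 s) <= (alpha + 1) * B0 + Kosc + Lf * B + Ku).
{ destruct (Hsys s Hs) as [_ [_ [_ [_ [_ [_ [_ [_ [_ [_ Eq3]]]]]]]]]].
  pose proof (eq_r2 (r2 s) (r s) (osc lambda p eps (zp s) (zm s) s)
          (hfun lambda p eps (zp s) (zm s) (r s) s) (U s) eps alpha Eq3) as Er.
  assert (Hl : eps ^ 2 * Cmod (r2 s) = Cmod (RtoC (eps ^ 2) * r2 s)) by (rewrite Cmod_RtoC_mult, Rabs_pos_eq; lra).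
  rewrite Hl, Er, Cmod_opp.
  assert (Hrs' : Cmod (r s) <= B0) by (apply Hrb; auto).
  assert (HH := Hh s Hs ltac:(unfold B; lra)).
  assert (HA1 : Cmod (RtoC (alpha + / eps ^ 2) * r s) <= (alpha + 1) * B0).
  { rewrite Cmod_RtoC_mult. assert (0 < / eps ^ 2) by (apply Rinv_0_lt_compat; lra).
    rewrite Rabs_pos_eq by lra.
    replace ((alpha + / eps ^ 2) * Cmod (r s)) with ((alpha * eps ^ 2 + 1) * (/ eps ^ 2 * Cmod (r s))) by (field; lra).
    assert (/ eps ^ 2 * Cmod (r s) <= B0).
    { apply Rmult_le_reg_l with (eps ^ 2). lra. rewrite <- Rmult_assoc, Rinv_r by lra. lra. }
    assert (0 <= / eps ^ 2 * Cmod (r s)) by (apply Rmult_le_pos; [lra|apply Cmod_ge_0]).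
    apply Rmult_le_compat; nra. }
  assert (HA2 : Cmod (RtoC (eps ^ 2) * U s) <= Ku).
  { rewrite Cmod_RtoC_mult, Rabs_pos_eq by lra. pose proof (HU s Hs). pose proof (Cmod_ge_0 (U s)). nra. }
  assert (HA3 : Lf * Cmod (r s) <= Lf * B) by (apply Rmult_le_compat_l; unfold B in *; lra).
  pose proof (Hosc s Hs).
  eapply Rle_trans. apply Cmod_triangle. eapply Rle_trans. apply Rplus_le_compat_r. apply Cmod_triangle.
  eapply Rle_trans. apply Rplus_le_compat_r. apply Rplus_le_compat_r. apply Cmod_triangle.
  lra. }
assert (Hr0' : Cmod (r s) / eps ^ 2 <= B0).
{ unfold Rdiv. apply Rmult_le_reg_l with (eps ^ 2). lra.
  replace (eps ^ 2 * (Cmod (r s) * / eps ^ 2)) with (Cmod (r s)) by (field; lra). lra. }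
unfold K.
repeat split; lra.
Qed.
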